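(* For each $a\in[0,1)$, the set $[(a,0)]=\{H_\varphi(a,0):\varphi\in\mathrm{Aut}(\mathbb{D})\}$ is a closed, path-connected subset of $\mathbb{G}$.
   Context: $\mathbb{D}$ is the open unit disc in $\mathbb{C}$ and $\mathrm{Aut}(\mathbb{D})$ its group of holomorphic automorphisms. The symmetrized bidisc is $\mathbb{G}=\{(z_1+z_2,z_1z_2): z_1,z_2\in\mathbb{D}\}\subset\mathbb{C}^2$. For $\varphi\in\mathrm{Aut}(\mathbb{D})$, $H_\varphi:\mathbb{G}\to\mathbb{G}$ is defined by $H_\varphi(z_1+z_2,z_1z_2)=(\varphi(z_1)+\varphi(z_2),\varphi(z_1)\varphi(z_2))$. ''Closed'' means closed in the relative topology of $\mathbb{G}$. *)

(* Defs.v *)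
From Stdlib Require Import Reals.
From Coquelicot Require Import Coquelicot.
Open Scope R_scope.

Definition inD (z : C) : Prop := Cmod z < 1.

Definition holo_on_D (f : C -> C) : Prop :=
  forall z : C, inD z -> @ex_derive C_AbsRing C_NormedModule f z.

Definition AutD (phi : C -> C) : Prop :=
  holo_on_D phi /\ (forall z, inD z -> inD (phi z)) /\
  exists psi : C -> C,
    holo_on_D psi /\ (forall z, inD z -> inD (psi z)) /\
    (forall z, inD z -> psi (phi z) = z) /\
    (forall w, inD w -> phi (psi w) = w).

Definition C2 : UniformSpace := prod_UniformSpace C_UniformSpace C_UniformSpace.

Definition inG (x : C2) : Prop :=
  exists z1 z2 : C, inD z1 /\ inD z2 /\ x = ((z1 + z2)%C, (z1 * z2)%C).

Definition Hphi (phi : C -> C) (x y : C2) : Prop :=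
  exists z1 z2 : C, inD z1 /\ inD z2 /\ x = ((z1 + z2)%C, (z1 * z2)%C) /\
    y = ((phi z1 + phi z2)%C, (phi z1 * phi z2)%C).

Definition orbit_a0 (a : R) (y : C2) : Prop :=
  exists phi, AutD phi /\ Hphi phi (RtoC a, RtoC 0) y.

Definition rel_closed_in_G (S : C2 -> Prop) : Prop :=
  (forall y, S y -> inG y) /\
  exists F : C2 -> Prop, closed F /\ forall y, S y <-> (F y /\ inG y).

Definition path_connected (S : C2 -> Prop) : Prop :=
  forall x y, S x -> S y ->
  exists g : R -> C2,
    (forall t, 0 <= t <= 1 ->
       filterlim g (within (fun s => 0 <= s <= 1) (locally t)) (locally (g t))) /\
    (forall t, 0 <= t <= 1 -> S (g t)) /\ g 0 = x /\ g 1 = y.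

(* Main.v *)
Require Import Defs.
From Stdlib Require Import Reals Lra Lia Psatz.
From Coquelicot Require Import Coquelicot.
From Stdlib Require Import ClassicalEpsilon Classical.
Open Scope R_scope.

Definition cdiff (f : C -> C) (z l : C) : Prop :=
  forall eps, 0 < eps -> exists delta, 0 < delta /\
    forall w, Cmod (w - z) < delta -> Cmod (f w - f z - l * (w - z)) <= eps * Cmod (w - z).

Definition ccont (f : C -> C) (z : C) : Prop :=
  forall eps, 0 < eps -> exists delta, 0 < delta /\
    forall w, Cmod (w - z) < delta -> Cmod (f w - f z) < eps.

Lemma is_derive_cdiff (f : C -> C) (z l : C) :
  @is_derive C_AbsRing C_NormedModule f z l <-> cdiff f z l.
Proof.
  split.
  - intros [_ Hd] eps Heps.
    specialize (Hd z (fun P H => H) (mkposreal eps Heps)).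
    destruct Hd as [d Hd]. exists d; split; [apply cond_pos|].
    intros w Hw. specialize (Hd w Hw). simpl in Hd.
    replace (f w - f z - l * (w - z))%C with (minus (minus (f w) (f z)) (scal (minus w z) l)).
    exact Hd. unfold minus, plus, opp, scal; simpl. change (mult (w + - z)%C l) with ((w + - z) * l)%C. ring.
  - intros Hc. split. apply is_linear_scal_l.
    intros x Hx. apply (@is_filter_lim_locally_unique _ (AbsRing_NormedModule C_AbsRing)) in Hx. subst x.
    intros eps. destruct (Hc eps (cond_pos eps)) as [d [Hd H]].
    exists (mkposreal d Hd). intros w Hw. specialize (H w Hw).
    change (Cmod (minus (minus (f w) (f z)) (scal (minus w z) l)) <= eps * Cmod (minus w z)).
    replace (minus (minus (f w) (f z)) (scal (minus w z) l)) with (f w - f z - l * (w - z))%C.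
    exact H. unfold minus, plus, opp, scal; simpl. change (mult (w + - z)%C l) with ((w + - z) * l)%C. ring.
Qed.

Lemma is_derive_cdiff' (f : C -> C) (z l : C) :
  @is_derive C_AbsRing (AbsRing_NormedModule C_AbsRing) f z l <-> cdiff f z l.
Proof.
  split.
  - intros [_ Hd] eps Heps.
    specialize (Hd z (fun P H => H) (mkposreal eps Heps)).
    destruct Hd as [d Hd]. exists d; split; [apply cond_pos|].
    intros w Hw. specialize (Hd w Hw). simpl in Hd.
    replace (f w - f z - l * (w - z))%C with (minus (minus (f w) (f z)) (scal (minus w z) l)).
    exact Hd. unfold minus, plus, opp, scal; simpl. change (mult (w + - z)%C l) with ((w + - z) * l)%C. ring.
  - intros Hc. split. apply is_linear_scal_l.
    intros x Hx. apply (@is_filter_lim_locally_unique _ (AbsRing_NormedModule C_AbsRing)) in Hx. subst x.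
    intros eps. destruct (Hc eps (cond_pos eps)) as [d [Hd H]].
    exists (mkposreal d Hd). intros w Hw. specialize (H w Hw).
    change (Cmod (minus (minus (f w) (f z)) (scal (minus w z) l)) <= eps * Cmod (minus w z)).
    replace (minus (minus (f w) (f z)) (scal (minus w z) l)) with (f w - f z - l * (w - z))%C.
    exact H. unfold minus, plus, opp, scal; simpl. change (mult (w + - z)%C l) with ((w + - z) * l)%C. ring.
Qed.

Notation cd f z l := (@is_derive C_AbsRing C_NormedModule f z l).

Lemma cd_const (c z : C) : cd (fun _ => c) z (RtoC 0).
Proof. apply is_derive_cdiff. intros e He. exists 1; split; [lra|]. intros w _.
  replace (c - c - RtoC 0 * (w - z))%C with (RtoC 0) by ring. rewrite Cmod_0. pose proof (Cmod_ge_0 (w - z)). nra. Qed.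
Lemma cd_id (z : C) : cd (fun w => w) z (RtoC 1).
Proof. apply is_derive_cdiff. intros e He. exists 1; split; [lra|]. intros w _.
  replace (w - z - RtoC 1 * (w - z))%C with (RtoC 0) by ring. rewrite Cmod_0. pose proof (Cmod_ge_0 (w - z)). nra. Qed.
Lemma cd_plus f g z df dg : cd f z df -> cd g z dg -> cd (fun w => f w + g w)%C z (df + dg)%C.
Proof. intros. apply (@is_derive_plus C_AbsRing C_NormedModule); auto. Qed.
Lemma cd_minus f g z df dg : cd f z df -> cd g z dg -> cd (fun w => f w - g w)%C z (df - dg)%C.
Proof. intros. apply (@is_derive_minus C_AbsRing C_NormedModule); auto. Qed.
Lemma cd_comp f g z df dg : cd f (g z) df -> cd g z dg -> cd (fun w => f (g w)) z (dg * df)%C.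
Proof. intros H1 H2. apply (@is_derive_comp C_AbsRing C_NormedModule). exact H1.
  apply is_derive_cdiff'. apply is_derive_cdiff. exact H2. Qed.
Lemma cd_ext f g z l : (forall w, f w = g w) -> cd f z l -> cd g z l.
Proof. intros. apply (@is_derive_ext C_AbsRing C_NormedModule) with f; auto. Qed.
Lemma cd_mult f g z df dg : cd f z df -> cd g z dg -> cd (fun w => f w * g w)%C z (df * g z + f z * dg)%C.
Proof.
  intros Hf Hg. apply is_derive_cdiff in Hf, Hg. apply is_derive_cdiff' in Hf, Hg.
  apply is_derive_cdiff. apply is_derive_cdiff'. unfold is_derive.
  eapply filterdiff_ext_lin.
  apply (@filterdiff_mult_fct C_AbsRing (AbsRing_NormedModule C_AbsRing) f g z); [apply Cmult_comm|exact Hf|exact Hg].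
  intros y. simpl. change (mult (mult y df) (g z) + mult (f z) (mult y dg) = mult y (df * g z + f z * dg))%C.
  unfold mult; simpl. ring.
Qed.

Lemma cdiff_cont f z l : cdiff f z l -> ccont f z.
Proof.
  intros H eps Heps.
  destruct (H 1 Rlt_0_1) as [d [Hd Hd']].
  exists (Rmin d (eps / (1 + Cmod l + 1))). split.
  { apply Rmin_pos; auto. apply Rdiv_lt_0_compat; auto. pose proof (Cmod_ge_0 l). lra. }
  intros w Hw.
  assert (Hw1 : Cmod (w - z) < d) by (eapply Rlt_le_trans; [exact Hw| apply Rmin_l]).
  assert (Hw2 : Cmod (w - z) < eps / (1 + Cmod l + 1)) by (eapply Rlt_le_trans; [exact Hw| apply Rmin_r]).
  specialize (Hd' w Hw1).
  replace (f w - f z)%C with ((f w - f z - l * (w - z)) + l * (w - z))%C by ring.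
  eapply Rle_lt_trans. apply Cmod_triangle. rewrite Cmod_mult.
  pose proof (Cmod_ge_0 l). pose proof (Cmod_ge_0 (w - z)).
  assert (Cmod (w - z) * (1 + Cmod l + 1) < eps).
  { assert (E : eps / (1 + Cmod l + 1) * (1 + Cmod l + 1) = eps) by (field; lra). nra. }
  nra.
Qed.

Lemma cd_cont f z l : cd f z l -> ccont f z.
Proof. intros H. apply is_derive_cdiff in H. eapply cdiff_cont; eauto. Qed.

Lemma Cmod_lower (a b : C) : Cmod a - Cmod b <= Cmod (a - b).
Proof.
  assert (Cmod a <= Cmod (a - b) + Cmod b).
  { replace a with ((a - b) + b)%C at 1 by ring. apply Cmod_triangle. }
  lra.
Qed.

Lemma cd_inv (z : C) : z <> 0%C -> cd Cinv z (- / (z * z))%C.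
Proof.
  intros Hz. apply is_derive_cdiff. intros eps Heps.
  assert (Hm : 0 < Cmod z) by (apply Cmod_gt_0; auto).
  exists (Rmin (Cmod z / 2) (eps * (Cmod z * Cmod z * Cmod z) / 2)). split.
  { apply Rmin_pos; [lra|]. assert (0 < Cmod z * Cmod z * Cmod z) by (repeat apply Rmult_lt_0_compat; auto).
    apply Rdiv_lt_0_compat; nra. }
  intros w Hw.
  assert (Hw1 : Cmod (w - z) < Cmod z / 2) by (eapply Rlt_le_trans; [exact Hw| apply Rmin_l]).
  assert (Hw2 : Cmod (w - z) < eps * (Cmod z * Cmod z * Cmod z) / 2) by (eapply Rlt_le_trans; [exact Hw| apply Rmin_r]).
  assert (Hwm : Cmod z / 2 <= Cmod w).
  { pose proof (Cmod_lower z w). replace (z - w)%C with (- (w - z))%C in H by ring. rewrite Cmod_opp in H. lra. }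
  assert (Hw0 : w <> 0%C). { intro E. subst. rewrite Cmod_0 in Hwm. lra. }
  replace (/ w - / z - - / (z * z) * (w - z))%C with ((w - z) * (w - z) / (w * (z * z)))%C by (field; split; auto).
  unfold Cdiv. rewrite !Cmod_mult, Cmod_inv by (apply Cmult_neq_0; auto; apply Cmult_neq_0; auto).
  rewrite !Cmod_mult.
  pose proof (Cmod_ge_0 (w - z)).
  assert (0 < Cmod w * (Cmod z * Cmod z)) by (apply Rmult_lt_0_compat; nra).
  apply Rmult_le_reg_r with (Cmod w * (Cmod z * Cmod z)); auto.
  rewrite Rmult_assoc, Rinv_l by lra. rewrite Rmult_1_r.
  assert (Cmod (w - z) <= eps * (Cmod w * (Cmod z * Cmod z))).
  { assert (eps * (Cmod z * Cmod z * Cmod z) / 2 <= eps * (Cmod w * (Cmod z * Cmod z))).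
    { assert (Cmod z * Cmod z * Cmod z / 2 <= Cmod w * (Cmod z * Cmod z)) by nra. nra. }
    lra. }
  nra.
Qed.

Lemma cd_div f g z df dg : cd f z df -> cd g z dg -> g z <> RtoC 0 ->
  cd (fun w => f w / g w)%C z ((df * g z - f z * dg) / (g z * g z))%C.
Proof.
  intros Hf Hg Hz.
  assert (Hi : cd (fun w => Cinv (g w)) z (dg * - / (g z * g z))%C) by (apply cd_comp; auto; apply cd_inv; auto).
  pose proof (cd_mult _ _ _ _ _ Hf Hi) as H.
  replace ((df * g z - f z * dg) / (g z * g z))%C with (df * / g z + f z * (dg * - / (g z * g z)))%C by (field; auto).
  exact H.
Qed.

Lemma cd_eq f z (l l' : C) : cd f z l -> l = l' -> cd f z l'.
Proof. intros H E; subst; auto. Qed.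

Lemma Cmod_pair_le (a b : R) : Cmod (a, b) <= Rabs a + Rabs b.
Proof.
  unfold Cmod; simpl. apply Rsqr_incr_0_var.
  2: { pose proof (Rabs_pos a); pose proof (Rabs_pos b); lra. }
  rewrite Rsqr_sqrt. 2: nra.
  unfold Rsqr. pose proof (Rabs_pos a); pose proof (Rabs_pos b).
  assert (a*a = Rabs a * Rabs a) by (rewrite <- Rabs_mult; rewrite Rabs_right; nra).
  assert (b*b = Rabs b * Rabs b) by (rewrite <- Rabs_mult; rewrite Rabs_right; nra).
  nra.
Qed.

Lemma Cmod_pair (a b : R) : Cmod (a, b) = sqrt (a * a + b * b).
Proof. unfold Cmod; simpl. f_equal; ring. Qed.

Lemma fst_le_Cmod (z : C) : Rabs (fst z) <= Cmod z.
Proof. eapply Rle_trans; [apply Rmax_l| apply Rmax_Cmod]. Qed.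
Lemma snd_le_Cmod (z : C) : Rabs (snd z) <= Cmod z.
Proof. eapply Rle_trans; [apply Rmax_r| apply Rmax_Cmod]. Qed.

Lemma dlim_bound f x l : derivable_pt_lim f x l ->
  forall eps, 0 < eps -> exists delta, 0 < delta /\ forall h, Rabs h < delta ->
  Rabs (f (x + h) - f x - l * h) <= eps * Rabs h.
Proof.
  intros H eps Heps. destruct (H eps Heps) as [d Hd]. exists d; split; [apply cond_pos|].
  intros h Hh. destruct (Req_dec h 0) as [->|Hn].
  { rewrite Rplus_0_r. replace (f x - f x - l * 0) with 0 by ring. rewrite Rabs_R0, Rmult_0_r. lra. }
  specialize (Hd h Hn Hh).
  replace (f (x + h) - f x - l * h) with (((f (x + h) - f x) / h - l) * h) by (field; auto).
  rewrite Rabs_mult. pose proof (Rabs_pos h). nra.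
Qed.

Definition cexp (w : C) : C := (exp (fst w) * cos (snd w), exp (fst w) * sin (snd w)).

Lemma cexp_add (a b : C) : cexp (a + b)%C = (cexp a * cexp b)%C.
Proof.
  destruct a as [a1 a2]; destruct b as [b1 b2]. unfold cexp, Cmult, Cplus; simpl.
  rewrite exp_plus, cos_plus, sin_plus. f_equal; ring.
Qed.

Lemma Cmod_cexp (w : C) : Cmod (cexp w) = exp (fst w).
Proof.
  unfold cexp. rewrite Cmod_pair.
  replace (exp (fst w) * cos (snd w) * (exp (fst w) * cos (snd w)) +
     exp (fst w) * sin (snd w) * (exp (fst w) * sin (snd w))) with (exp (fst w) * exp (fst w)).
  apply sqrt_square. left; apply exp_pos.
  replace (exp (fst w) * exp (fst w)) with (exp (fst w) * exp (fst w) * (Rsqr (sin (snd w)) + Rsqr (cos (snd w)))).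
  unfold Rsqr; ring. rewrite sin2_cos2. ring.
Qed.

Lemma cexp_0_bound : forall eps, 0 < eps -> exists delta, 0 < delta /\ forall h,
  Cmod h < delta -> Cmod (cexp h - 1 - h) <= eps * Cmod h.
Proof.
  intros eps Heps.
  set (e := eps / 8).
  assert (He : 0 < e) by (unfold e; lra).
  assert (He1 : e <= 1 \/ 1 < e) by lra.
  set (e' := Rmin e 1).
  assert (He' : 0 < e') by (apply Rmin_pos; lra).
  destruct (dlim_bound exp 0 1 ltac:(pose proof (derivable_pt_lim_exp 0) as HH; rewrite exp_0 in HH; exact HH) e' He') as [d1 [Hd1 H1]].
  destruct (dlim_bound cos 0 0 ltac:(pose proof (derivable_pt_lim_cos 0) as HH; rewrite sin_0, Ropp_0 in HH; exact HH) e' He') as [d2 [Hd2 H2]].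
  destruct (dlim_bound sin 0 1 ltac:(pose proof (derivable_pt_lim_sin 0) as HH; rewrite cos_0 in HH; exact HH) e' He') as [d3 [Hd3 H3]].
  exists (Rmin (Rmin 1 e) (Rmin d1 (Rmin d2 d3))). split.
  { repeat apply Rmin_pos; lra. }
  intros h Hh.
  assert (Hh1 : Cmod h < 1) by (eapply Rlt_le_trans; [exact Hh|]; eapply Rle_trans; [apply Rmin_l|apply Rmin_l]).
  assert (Hh0 : Cmod h < e) by (eapply Rlt_le_trans; [exact Hh|]; eapply Rle_trans; [apply Rmin_l|apply Rmin_r]).
  assert (Hh2 : Cmod h < d1) by (eapply Rlt_le_trans; [exact Hh|]; eapply Rle_trans; [apply Rmin_r|apply Rmin_l]).
  assert (Hh3 : Cmod h < d2) by (eapply Rlt_le_trans; [exact Hh|]; eapply Rle_trans; [apply Rmin_r|]; eapply Rle_trans; [apply Rmin_r|apply Rmin_l]).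
  assert (Hh4 : Cmod h < d3) by (eapply Rlt_le_trans; [exact Hh|]; eapply Rle_trans; [apply Rmin_r|]; eapply Rle_trans; [apply Rmin_r|apply Rmin_r]).
  destruct h as [u v].
  pose proof (fst_le_Cmod (u, v)) as Hu. pose proof (snd_le_Cmod (u, v)) as Hv. simpl in Hu, Hv.
  assert (Ee' : e' <= e) by apply Rmin_l.
  assert (Ee1 : e' <= 1) by apply Rmin_r.
  specialize (H1 u ltac:(lra)). specialize (H2 v ltac:(lra)). specialize (H3 v ltac:(lra)).
  rewrite Rplus_0_l, exp_0 in H1. rewrite Rplus_0_l, cos_0 in H2. rewrite Rplus_0_l, sin_0 in H3.
  replace (cexp (u, v) - 1 - (u, v))%C with
    (((exp u - 1 - 1 * u) * cos v + (1 + u) * (cos v - 1 - 0 * v))%R,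
     ((exp u - 1 - 1 * u + u) * (sin v - 0 - 1 * v + v) + (sin v - 0 - 1 * v))%R).
  2: { unfold cexp, Cminus, Cplus, Copp; simpl. f_equal; ring. }
  eapply Rle_trans. apply Cmod_pair_le.
  pose proof (Rabs_pos u). pose proof (Rabs_pos v). pose proof (Cmod_ge_0 (u, v)).
  assert (A1 : Rabs ((exp u - 1 - 1 * u) * cos v) <= e * Cmod (u, v)).
  { rewrite Rabs_mult. pose proof (COS_bound v). assert (Rabs (cos v) <= 1) by (apply Rabs_le; lra).
    pose proof (Rabs_pos (exp u - 1 - 1 * u)). pose proof (Rabs_pos (cos v)). nra. }
  assert (A2 : Rabs ((1 + u) * (cos v - 1 - 0 * v)) <= 2 * e * Cmod (u, v)).
  { rewrite Rabs_mult. assert (Rabs (1 + u) <= 2). { eapply Rle_trans. apply Rabs_triang. rewrite Rabs_R1. lra. }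
    pose proof (Rabs_pos (1 + u)). pose proof (Rabs_pos (cos v - 1 - 0 * v)). nra. }
  assert (A3 : Rabs ((exp u - 1 - 1 * u + u) * (sin v - 0 - 1 * v + v)) <= 4 * e * Cmod (u, v)).
  { rewrite Rabs_mult.
    assert (Rabs (exp u - 1 - 1 * u + u) <= 2 * Cmod (u, v)).
    { eapply Rle_trans. apply Rabs_triang. nra. }
    assert (Rabs (sin v - 0 - 1 * v + v) <= 2 * Cmod (u, v)).
    { eapply Rle_trans. apply Rabs_triang. nra. }
    pose proof (Rabs_pos (exp u - 1 - 1 * u + u)). pose proof (Rabs_pos (sin v - 0 - 1 * v + v)). nra. }
  assert (A4 : Rabs (sin v - 0 - 1 * v) <= e * Cmod (u, v)) by nra.
  assert (Rabs ((exp u - 1 - 1 * u) * cos v + (1 + u) * (cos v - 1 - 0 * v)) <= 3 * e * Cmod (u, v)).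
  { eapply Rle_trans. apply Rabs_triang. lra. }
  assert (Rabs ((exp u - 1 - 1 * u + u) * (sin v - 0 - 1 * v + v) + (sin v - 0 - 1 * v)) <= 5 * e * Cmod (u, v)).
  { eapply Rle_trans. apply Rabs_triang. lra. }
  unfold e in *. lra.
Qed.

Lemma cd_cexp (w : C) : cd cexp w (cexp w).
Proof.
  apply is_derive_cdiff. intros eps Heps.
  assert (Hp : 0 < Cmod (cexp w)) by (rewrite Cmod_cexp; apply exp_pos).
  destruct (cexp_0_bound (eps / Cmod (cexp w))) as [d [Hd H]]. apply Rdiv_lt_0_compat; auto.
  exists d; split; auto. intros z Hz. specialize (H (z - w)%C Hz).
  replace (cexp z - cexp w - cexp w * (z - w))%C with (cexp w * (cexp (z - w) - 1 - (z - w)))%C.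
  2: { assert (E: cexp z = (cexp w * cexp (z - w))%C) by (rewrite <- cexp_add; f_equal; ring). rewrite E; ring. }
  rewrite Cmod_mult.
  replace (eps * Cmod (z - w)) with (Cmod (cexp w) * (eps / Cmod (cexp w) * Cmod (z - w))) by (field; lra).
  apply Rmult_le_compat_l; lra.
Qed.

Lemma normCR (x : C_R_NormedModule) : norm x = Cmod x.
Proof.
  unfold norm; simpl; unfold prod_norm; simpl. unfold Cmod. f_equal.
  change (norm (fst x)) with (Rabs (fst x)). change (norm (snd x)) with (Rabs (snd x)).
  rewrite !Rmult_1_r. rewrite <- !Rabs_mult. rewrite !Rabs_right by nra. simpl; ring.
Qed.

Lemma cont_R_C (g : R -> C) t :
  (forall eps, 0 < eps -> exists d, 0 < d /\ forall s, Rabs (s - t) < d -> Cmod (g s - g t) < eps) ->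
  @continuous R_UniformSpace C_R_CompleteNormedModule g t.
Proof.
  intros H P [eps HP]. destruct (H eps (cond_pos eps)) as [d [Hd Hd']].
  exists (mkposreal d Hd). intros s Hs. apply HP.
  specialize (Hd' s Hs).
  pose proof (fst_le_Cmod (g s - g t)%C). pose proof (snd_le_Cmod (g s - g t)%C).
  split; simpl in *.
  - change (Rabs (fst (g s) - fst (g t)) < eps). unfold Rminus. lra.
  - change (Rabs (snd (g s) - snd (g t)) < eps). unfold Rminus. lra.
Qed.

Lemma ccont_h (f : C -> C) x y : ccont f (x, y) ->
  @continuous R_UniformSpace C_R_CompleteNormedModule (fun t => f (t, y)) x.
Proof.
  intros H. apply cont_R_C. intros eps Heps. destruct (H eps Heps) as [d [Hd Hd']].
  exists d; split; auto. intros s Hs. apply Hd'.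
  assert (E : ((s, y) - (x, y))%C = RtoC (s - x)) by (unfold RtoC, Cminus, Cplus, Copp; simpl; f_equal; ring).
  change (Cmod ((s, y) - (x, y))%C < d).
  rewrite E, Cmod_R. auto.
Qed.

Lemma ccont_v (f : C -> C) x y : ccont f (x, y) ->
  @continuous R_UniformSpace C_R_CompleteNormedModule (fun t => f (x, t)) y.
Proof.
  intros H. apply cont_R_C. intros eps Heps. destruct (H eps Heps) as [d [Hd Hd']].
  exists d; split; auto. intros s Hs. apply Hd'.
  change (Cmod ((x, s) - (x, y))%C < d).
  assert (E : ((x, s) - (x, y))%C = (RtoC (s - y) * Ci)%C) by (unfold RtoC, Cminus, Cplus, Copp, Cmult, Ci; simpl; f_equal; ring).
  rewrite E, Cmod_mult, Cmod_R, Cmod_Ci. lra.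
Qed.

Lemma exh (f : C -> C) a b y : a <= b -> (forall x, a <= x <= b -> ccont f (x, y)) ->
  @ex_RInt C_R_CompleteNormedModule (fun t => f (t, y)) a b.
Proof.
  intros Hab H. apply ex_RInt_continuous. intros z Hz.
  rewrite Rmin_left, Rmax_right in Hz by lra. apply ccont_h; auto.
Qed.

Lemma exv (f : C -> C) c d x : c <= d -> (forall y, c <= y <= d -> ccont f (x, y)) ->
  @ex_RInt C_R_CompleteNormedModule (fun t => f (x, t)) c d.
Proof.
  intros Hab H. apply ex_RInt_continuous. intros z Hz.
  rewrite Rmin_left, Rmax_right in Hz by lra. apply ccont_v; auto.
Qed.

Definition RIh (f : C -> C) a b y : C := @RInt C_R_CompleteNormedModule (fun t => f (t, y)) a b.
Definition RIv (f : C -> C) c d x : C := @RInt C_R_CompleteNormedModule (fun t => f (x, t)) c d.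

Definition RI (f : C -> C) (a b c d : R) : C :=
  (RIh f a b c - RIh f a b d + Ci * (RIv f c d b - RIv f c d a))%C.

Definition rcont (f : C -> C) a b c d := forall x y, a <= x <= b -> c <= y <= d -> ccont f (x, y).

Lemma RI_split_x f a m b c d : a <= m <= b -> c <= d -> rcont f a b c d ->
  RI f a b c d = (RI f a m c d + RI f m b c d)%C.
Proof.
  intros Hm Hcd Hc. unfold RI, RIh.
  rewrite <- (@RInt_Chasles C_R_CompleteNormedModule (fun t => f (t, c)) a m b).
  rewrite <- (@RInt_Chasles C_R_CompleteNormedModule (fun t => f (t, d)) a m b).
  change (plus ?x ?y) with (Cplus x y). ring.
  all: first [apply exh; [lra|intros; apply Hc; lra] ].
Qed.

Lemma RI_split_y f a b c n d : a <= b -> c <= n <= d -> rcont f a b c d ->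
  RI f a b c d = (RI f a b c n + RI f a b n d)%C.
Proof.
  intros Hab Hn Hc. unfold RI, RIv.
  rewrite <- (@RInt_Chasles C_R_CompleteNormedModule (fun t => f (b, t)) c n d).
  rewrite <- (@RInt_Chasles C_R_CompleteNormedModule (fun t => f (a, t)) c n d).
  change (plus ?x ?y) with (Cplus x y). ring.
  all: first [apply exv; [lra|intros; apply Hc; lra] ].
Qed.

Lemma RInt_Cminus (F G : R -> C) a b :
  @ex_RInt C_R_CompleteNormedModule F a b -> @ex_RInt C_R_CompleteNormedModule G a b ->
  @RInt C_R_CompleteNormedModule (fun t => F t - G t)%C a b =
  (@RInt C_R_CompleteNormedModule F a b - @RInt C_R_CompleteNormedModule G a b)%C.
Proof. intros HF HG. apply (@RInt_minus C_R_CompleteNormedModule F G a b HF HG). Qed.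

Lemma RInt_Cconst (k : C) a b : @RInt C_R_CompleteNormedModule (fun _ => k) a b = (RtoC (b - a) * k)%C.
Proof. rewrite RInt_const. apply scal_R_Cmult. Qed.

Lemma RInt_norm_bound (F : R -> C) a b M : a <= b -> @ex_RInt C_R_CompleteNormedModule F a b ->
  (forall t, a <= t <= b -> Cmod (F t) <= M) -> Cmod (@RInt C_R_CompleteNormedModule F a b) <= (b - a) * M.
Proof.
  intros Hab HF HM. rewrite <- normCR.
  apply (@norm_RInt_le_const C_R_NormedModule F a b _ M Hab).
  intros t Ht. rewrite normCR. auto. apply (@RInt_correct C_R_CompleteNormedModule); auto.
Qed.

Ltac solve_ex :=
  match goal with
  | |- ex_RInt (fun t => ?F (t, ?y)) ?a ?b =>
      apply (exh F a b y); [lra| intros; match goal with H : rcont F _ _ _ _ |- _ => apply H; lra end]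
  | |- ex_RInt (fun t => ?F (?x, t)) ?c ?d =>
      apply (exv F c d x); [lra| intros; match goal with H : rcont F _ _ _ _ |- _ => apply H; lra end]
  end.

Ltac setR := repeat match goal with |- context [@RInt ?V ?F ?a ?b] => let X := fresh "X" in set (X := @RInt V F a b) end.

Lemma RI_minus f g a b c d : a <= b -> c <= d -> rcont f a b c d -> rcont g a b c d ->
  RI (fun w => f w - g w)%C a b c d = (RI f a b c d - RI g a b c d)%C.
Proof.
  intros Hab Hcd Hf Hg. unfold RI, RIh, RIv.
  rewrite (RInt_Cminus (fun t => f (t, c)) (fun t => g (t, c))).
  rewrite (RInt_Cminus (fun t => f (t, d)) (fun t => g (t, d))).
  rewrite (RInt_Cminus (fun t => f (b, t)) (fun t => g (b, t))).
  rewrite (RInt_Cminus (fun t => f (a, t)) (fun t => g (a, t))).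
  setR. ring.
  all: solve_ex.
Qed.



Lemma ccont_affine (k l p z : C) : ccont (fun w => k + l * (w - p))%C z.
Proof.
  intros eps Heps. exists (eps / (Cmod l + 1)). split.
  { apply Rdiv_lt_0_compat; auto. pose proof (Cmod_ge_0 l); lra. }
  intros w Hw.
  replace (k + l * (w - p) - (k + l * (z - p)))%C with (l * (w - z))%C by ring.
  rewrite Cmod_mult. pose proof (Cmod_ge_0 l). pose proof (Cmod_ge_0 (w - z)).
  assert (E : eps / (Cmod l + 1) * (Cmod l + 1) = eps) by (field; lra).
  nra.
Qed.

Lemma RI_affine (k l p : C) a b c d : a <= b -> c <= d ->
  RI (fun w => k + l * (w - p))%C a b c d = RtoC 0.
Proof.
  intros Hab Hcd.
  set (A := (fun w => k + l * (w - p))%C).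
  assert (HA : rcont A a b c d) by (intros x y _ _; apply ccont_affine).
  unfold RI, RIh, RIv.
  rewrite <- (RInt_Cminus (fun t => A (t, c)) (fun t => A (t, d))) by solve_ex.
  rewrite <- (RInt_Cminus (fun t => A (b, t)) (fun t => A (a, t))) by solve_ex.
  rewrite (@RInt_ext C_R_CompleteNormedModule (fun t => A (t, c) - A (t, d))%C (fun _ => l * (RtoC (c - d) * Ci))%C)
    by (intros; unfold A, RtoC, Cminus, Cplus, Copp, Cmult, Ci; simpl; f_equal; ring).
  rewrite (@RInt_ext C_R_CompleteNormedModule (fun t => A (b, t) - A (a, t))%C (fun _ => l * RtoC (b - a))%C)
    by (intros; unfold A, RtoC, Cminus, Cplus, Copp, Cmult, Ci; simpl; f_equal; ring).
  rewrite !RInt_Cconst. unfold RtoC, Cminus, Cplus, Copp, Cmult, Ci; simpl. f_equal; ring.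
Qed.

Lemma RI_const (k : C) a b c d : RI (fun _ => k) a b c d = RtoC 0.
Proof. unfold RI, RIh, RIv. setR. ring. Qed.

Lemma RI_bound f a b c d M : a <= b -> c <= d -> rcont f a b c d ->
  (forall x y, a <= x <= b -> c <= y <= d -> Cmod (f (x, y)) <= M) ->
  Cmod (RI f a b c d) <= 2 * (b - a) * M + 2 * (d - c) * M.
Proof.
  intros Hab Hcd Hf HM. unfold RI.
  assert (B1 : Cmod (RIh f a b c) <= (b - a) * M)
    by (apply RInt_norm_bound; [lra|solve_ex|intros; apply HM; lra]).
  assert (B2 : Cmod (RIh f a b d) <= (b - a) * M)
    by (apply RInt_norm_bound; [lra|solve_ex|intros; apply HM; lra]).
  assert (B3 : Cmod (RIv f c d b) <= (d - c) * M)
    by (apply RInt_norm_bound; [lra|solve_ex|intros; apply HM; lra]).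
  assert (B4 : Cmod (RIv f c d a) <= (d - c) * M)
    by (apply RInt_norm_bound; [lra|solve_ex|intros; apply HM; lra]).
  set (X := RIh f a b c) in *. set (X0 := RIh f a b d) in *. set (X1 := RIv f c d b) in *. set (X2 := RIv f c d a) in *.
  eapply Rle_trans. apply Cmod_triangle.
  rewrite Cmod_mult, Cmod_Ci, Rmult_1_l.
  pose proof (Cmod_triangle X (- X0)%C). pose proof (Cmod_triangle X1 (- X2)%C).
  rewrite Cmod_opp in *. unfold Cminus. lra.
Qed.

Record rect := mkR { ra : R; rb : R; rc : R; rd : R }.

Definition RIQ f Q := RI f (ra Q) (rb Q) (rc Q) (rd Q).
Definition mu Q := ((rb Q - ra Q) + (rd Q - rc Q)) ^ 2.
Definition quarter (Q : rect) (i : nat) : rect :=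
  let m := (ra Q + rb Q) / 2 in let n := (rc Q + rd Q) / 2 in
  match i with
  | O => mkR (ra Q) m (rc Q) n
  | 1%nat => mkR m (rb Q) (rc Q) n
  | 2%nat => mkR (ra Q) m n (rd Q)
  | _ => mkR m (rb Q) n (rd Q)
  end.

Definition valid Q := ra Q <= rb Q /\ rc Q <= rd Q.
Definition subr Q Q0 := ra Q0 <= ra Q /\ rb Q <= rb Q0 /\ rc Q0 <= rc Q /\ rd Q <= rd Q0.

Lemma rcont_sub f Q Q0 : subr Q Q0 -> rcont f (ra Q0) (rb Q0) (rc Q0) (rd Q0) ->
  rcont f (ra Q) (rb Q) (rc Q) (rd Q).
Proof. intros [? [? [? ?]]] HH x y Hx Hy. apply HH; lra. Qed.

Lemma quarter_geom Q i : valid Q ->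
  valid (quarter Q i) /\ subr (quarter Q i) Q /\
  rb (quarter Q i) - ra (quarter Q i) = (rb Q - ra Q) / 2 /\
  rd (quarter Q i) - rc (quarter Q i) = (rd Q - rc Q) / 2.
Proof.
  intros [H1 H2]. unfold valid, subr.
  destruct i as [|[|[|i]]]; simpl; repeat split; lra.
Qed.

Lemma RIQ_quarters f Q : valid Q -> rcont f (ra Q) (rb Q) (rc Q) (rd Q) ->
  RIQ f Q = (RIQ f (quarter Q 0) + RIQ f (quarter Q 1) + RIQ f (quarter Q 2) + RIQ f (quarter Q 3))%C.
Proof.
  intros [H1 H2] Hc. unfold RIQ; simpl.
  rewrite (RI_split_x f (ra Q) ((ra Q + rb Q) / 2) (rb Q)) by (auto; lra).
  rewrite (RI_split_y f (ra Q) ((ra Q + rb Q) / 2) (rc Q) ((rc Q + rd Q)/2)); try lra.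
  rewrite (RI_split_y f ((ra Q + rb Q) / 2) (rb Q) (rc Q) ((rc Q + rd Q)/2)); try lra.
  ring.
  all: intros x y Hx Hy; apply Hc; lra.
Qed.

Definition bad f eps Q := 2 * eps * mu Q < Cmod (RIQ f Q).

Lemma bad_quarter f eps Q : valid Q -> rcont f (ra Q) (rb Q) (rc Q) (rd Q) -> bad f eps Q ->
  exists i, bad f eps (quarter Q i).
Proof.
  intros Hv Hc Hb. apply NNPP. intros Hn.
  assert (forall i, Cmod (RIQ f (quarter Q i)) <= 2 * eps * mu (quarter Q i)).
  { intros i. apply Rnot_lt_le. intros Hi. apply Hn. exists i. exact Hi. }
  assert (Hm : forall i, mu (quarter Q i) = mu Q / 4).
  { intros i. destruct (quarter_geom Q i Hv) as [_ [_ [E1 E2]]]. unfold mu. rewrite E1, E2. field. }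
  unfold bad in Hb. rewrite RIQ_quarters in Hb by auto.
  pose proof (H 0%nat). pose proof (H 1%nat). pose proof (H 2%nat). pose proof (H 3%nat).
  rewrite !Hm in *.
  pose proof (Cmod_triangle (RIQ f (quarter Q 0) + RIQ f (quarter Q 1) + RIQ f (quarter Q 2)) (RIQ f (quarter Q 3))).
  pose proof (Cmod_triangle (RIQ f (quarter Q 0) + RIQ f (quarter Q 1)) (RIQ f (quarter Q 2))).
  pose proof (Cmod_triangle (RIQ f (quarter Q 0)) (RIQ f (quarter Q 1))).
  lra.
Qed.

Definition next f eps Q : rect :=
  if excluded_middle_informative (bad f eps (quarter Q 0)) then quarter Q 0 else
  if excluded_middle_informative (bad f eps (quarter Q 1)) then quarter Q 1 else
  if excluded_middle_informative (bad f eps (quarter Q 2)) then quarter Q 2 else quarter Q 3.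

Lemma next_quarter f eps Q : exists i, next f eps Q = quarter Q i.
Proof.
  unfold next. destruct excluded_middle_informative. eauto.
  destruct excluded_middle_informative. eauto.
  destruct excluded_middle_informative; eauto.
Qed.

Lemma next_bad f eps Q : valid Q -> rcont f (ra Q) (rb Q) (rc Q) (rd Q) -> bad f eps Q ->
  bad f eps (next f eps Q).
Proof.
  intros Hv Hc Hb. destruct (bad_quarter f eps Q Hv Hc Hb) as [i Hi].
  unfold next. destruct excluded_middle_informative; auto.
  destruct excluded_middle_informative; auto.
  destruct excluded_middle_informative; auto.
  destruct i as [|[|[|i]]]; try contradiction. exact Hi.
Qed.

Lemma pow2_large K : exists n : nat, K < 2 ^ n.
Proof.
  assert (HH : forall n : nat, INR n <= 2 ^ n).
  { induction n. simpl; lra. rewrite S_INR. simpl.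
    assert (1 <= 2 ^ n) by (apply pow_R1_Rle; lra). lra. }
  destruct (Rle_or_lt K 0) as [HK|HK].
  - exists 0%nat. simpl. lra.
  - destruct (archimed_cor1 (/ K)) as [N [HN HN0]]. apply Rinv_0_lt_compat; auto.
    exists N. specialize (HH N). apply lt_INR in HN0. simpl in HN0.
    assert (K < INR N). { apply Rinv_lt_cancel; auto. } lra.
Qed.

Fixpoint seqQ f eps Q0 n : rect :=
  match n with O => Q0 | S n => next f eps (seqQ f eps Q0 n) end.

Lemma subr_trans Q1 Q2 Q3 : subr Q1 Q2 -> subr Q2 Q3 -> subr Q1 Q3.
Proof. unfold subr; intros; lra. Qed.
Lemma subr_refl Q : subr Q Q.
Proof. unfold subr; lra. Qed.

Lemma seq_inv f eps Q0 : valid Q0 -> rcont f (ra Q0) (rb Q0) (rc Q0) (rd Q0) -> bad f eps Q0 ->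
  forall n, valid (seqQ f eps Q0 n) /\ subr (seqQ f eps Q0 n) Q0 /\
    rb (seqQ f eps Q0 n) - ra (seqQ f eps Q0 n) = (rb Q0 - ra Q0) / 2 ^ n /\
    rd (seqQ f eps Q0 n) - rc (seqQ f eps Q0 n) = (rd Q0 - rc Q0) / 2 ^ n /\
    bad f eps (seqQ f eps Q0 n) /\ subr (seqQ f eps Q0 (S n)) (seqQ f eps Q0 n).
Proof.
  intros Hv Hc Hb n. induction n as [|n IHn].
  - simpl. destruct (next_quarter f eps Q0) as [i Hi]. rewrite Hi.
    destruct (quarter_geom Q0 i Hv) as [Hq1 [Hq2 _]].
    refine (conj Hv (conj (subr_refl _) (conj _ (conj _ (conj Hb Hq2))))); simpl; field.
  - destruct IHn as [Hv' [Hs' [E1 [E2 [Hb' Hs'']]]]].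
    simpl seqQ at 1 2 3 4 5 6 7 8.
    destruct (next_quarter f eps (seqQ f eps Q0 n)) as [i Hi].
    destruct (quarter_geom (seqQ f eps Q0 n) i Hv') as [Hv2 [Hs2 [E3 E4]]].
    rewrite Hi in *.
    split; [auto|]. split; [eapply subr_trans; eauto|].
    split. { rewrite E3, E1. simpl. field. apply pow_nonzero. lra. }
    split. { rewrite E4, E2. simpl. field. apply pow_nonzero. lra. }
    split. { rewrite <- Hi. apply next_bad; auto. eapply rcont_sub; eauto. }
    simpl. rewrite Hi. destruct (next_quarter f eps (quarter (seqQ f eps Q0 n) i)) as [j Hj]. rewrite Hj.
    apply quarter_geom; auto.
Qed.

Lemma seq_mono f eps Q0 : valid Q0 -> rcont f (ra Q0) (rb Q0) (rc Q0) (rd Q0) -> bad f eps Q0 ->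
  forall n k, subr (seqQ f eps Q0 (n + k)) (seqQ f eps Q0 n).
Proof.
  intros Hv Hc Hb n k. induction k.
  - rewrite Nat.add_0_r. apply subr_refl.
  - rewrite Nat.add_succ_r. eapply subr_trans; [|exact IHk].
    apply (seq_inv f eps Q0 Hv Hc Hb (n + k)).
Qed.

Lemma ccont_minus f g z : ccont f z -> ccont g z -> ccont (fun w => f w - g w)%C z.
Proof.
  intros Hf Hg e He. destruct (Hf (e/2) ltac:(lra)) as [d1 [Hd1 H1]].
  destruct (Hg (e/2) ltac:(lra)) as [d2 [Hd2 H2]].
  exists (Rmin d1 d2). split. apply Rmin_pos; auto. intros w Hw.
  specialize (H1 w ltac:(eapply Rlt_le_trans; [exact Hw|apply Rmin_l])).
  specialize (H2 w ltac:(eapply Rlt_le_trans; [exact Hw|apply Rmin_r])).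
  replace (f w - g w - (f z - g z))%C with ((f w - f z) + - (g w - g z))%C by ring.
  eapply Rle_lt_trans. apply Cmod_triangle. rewrite Cmod_opp. lra.
Qed.

Lemma cdiff_bound_to_RI f a b c d p l M :
  a <= b -> c <= d -> rcont f a b c d ->
  (forall x y, a <= x <= b -> c <= y <= d -> Cmod (f (x, y) - f p - l * ((x, y) - p)) <= M) ->
  Cmod (RI f a b c d) <= 2 * (b - a) * M + 2 * (d - c) * M.
Proof.
  intros Hab Hcd Hc HM.
  assert (E : RI f a b c d = RI (fun w => f w - (f p + l * (w - p)))%C a b c d).
  { rewrite RI_minus; auto. rewrite RI_affine; auto. ring.
    intros x y _ _; apply ccont_affine. }
  rewrite E. apply RI_bound; auto.
  - intros x y Hx Hy. apply ccont_minus. apply Hc; auto. apply ccont_affine.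
  - intros x y Hx Hy. replace (f (x, y) - (f p + l * ((x, y) - p)))%C with (f (x, y) - f p - l * ((x, y) - p))%C by ring.
    auto.
Qed.

Lemma Cmod_pt_diff x y a c : Cmod ((x, y) - (a, c))%C <= Rabs (x - a) + Rabs (y - c).
Proof.
  assert (E : ((x, y) - (a, c))%C = ((x - a)%R, (y - c)%R)) by (unfold Cminus, Cplus, Copp; simpl; f_equal; ring).
  rewrite E. apply Cmod_pair_le.
Qed.

Theorem goursat f a b c d : a <= b -> c <= d ->
  (forall x y, a <= x <= b -> c <= y <= d -> exists l, cdiff f (x, y) l) ->
  RI f a b c d = RtoC 0.
Proof.
  intros Hab Hcd Hd.
  assert (Hc : rcont f a b c d).
  { intros x y Hx Hy. destruct (Hd x y Hx Hy) as [l Hl]. eapply cdiff_cont; eauto. }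
  set (Q0 := mkR a b c d).
  assert (Hv : valid Q0) by (unfold valid; simpl; lra).
  assert (Good : forall eps, 0 < eps -> Cmod (RIQ f Q0) <= 2 * eps * mu Q0).
  { intros eps Heps. apply Rnot_lt_le. intros Hb. fold (bad f eps Q0) in Hb.
    pose proof (seq_inv f eps Q0 Hv Hc Hb) as Inv.
    pose proof (seq_mono f eps Q0 Hv Hc Hb) as Mono.
    assert (Hab' : forall n m, ra ((seqQ f eps Q0) n) <= rb ((seqQ f eps Q0) m)).
    { intros n m. destruct (Nat.le_ge_cases n m) as [Hnm|Hnm].
      - destruct (Mono n (m - n)%nat) as [H1 _]. replace (n + (m - n))%nat with m in H1 by lia.
        destruct (Inv m) as [[Hv1 _] _]. lra.
      - destruct (Mono m (n - m)%nat) as [_ [H1 _]]. replace (m + (n - m))%nat with n in H1 by lia.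
        destruct (Inv n) as [[Hv1 _] _]. lra. }
    assert (Hcd' : forall n m, rc ((seqQ f eps Q0) n) <= rd ((seqQ f eps Q0) m)).
    { intros n m. destruct (Nat.le_ge_cases n m) as [Hnm|Hnm].
      - destruct (Mono n (m - n)%nat) as [_ [_ [H1 _]]]. replace (n + (m - n))%nat with m in H1 by lia.
        destruct (Inv m) as [[_ Hv1] _]. lra.
      - destruct (Mono m (n - m)%nat) as [_ [_ [_ H1]]]. replace (m + (n - m))%nat with n in H1 by lia.
        destruct (Inv n) as [[_ Hv1] _]. lra. }
    destruct (completeness (fun x => exists n, x = ra ((seqQ f eps Q0) n))) as [al [Hal1 Hal2]].
    { exists (rb ((seqQ f eps Q0) 0%nat)). intros x [n ->]. apply Hab'. }
    { exists (ra ((seqQ f eps Q0) 0%nat)). eauto. }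
    destruct (completeness (fun x => exists n, x = rc ((seqQ f eps Q0) n))) as [ga [Hga1 Hga2]].
    { exists (rd ((seqQ f eps Q0) 0%nat)). intros x [n ->]. apply Hcd'. }
    { exists (rc ((seqQ f eps Q0) 0%nat)). eauto. }
    assert (Ha1 : forall n, ra ((seqQ f eps Q0) n) <= al) by (intros n; apply Hal1; eauto).
    assert (Ha2 : forall n, al <= rb ((seqQ f eps Q0) n)) by (intros n; apply Hal2; intros x [k ->]; apply Hab').
    assert (Hg1 : forall n, rc ((seqQ f eps Q0) n) <= ga) by (intros n; apply Hga1; eauto).
    assert (Hg2 : forall n, ga <= rd ((seqQ f eps Q0) n)) by (intros n; apply Hga2; intros x [k ->]; apply Hcd').
    destruct (Hd al ga) as [l Hl].
    { specialize (Ha1 0%nat); specialize (Ha2 0%nat); simpl in *; lra. }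
    { specialize (Hg1 0%nat); specialize (Hg2 0%nat); simpl in *; lra. }
    destruct (Hl eps Heps) as [del [Hdel Hdl]].
    destruct (pow2_large (((b - a) + (d - c)) / del)) as [n Hn].
    destruct (Inv n) as [Hvn [Hsn [E1 [E2 [Hbn _]]]]].
    assert (Hpow : 0 < 2 ^ n) by (apply pow_lt; lra).
    set (s := (rb ((seqQ f eps Q0) n) - ra ((seqQ f eps Q0) n)) + (rd ((seqQ f eps Q0) n) - rc ((seqQ f eps Q0) n))).
    assert (Hs : s < del).
    { unfold s. rewrite E1, E2. simpl.
      apply (Rmult_lt_compat_r del) in Hn; auto. unfold Rdiv in Hn. rewrite Rmult_assoc, Rinv_l in Hn by lra.
      apply Rmult_lt_reg_r with (2 ^ n); auto.
      replace (((b - a) / 2 ^ n + (d - c) / 2 ^ n) * 2 ^ n) with ((b - a) + (d - c)) by (field; lra).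
      lra. }
    unfold bad in Hbn.
    assert (Hbd : Cmod (RIQ f ((seqQ f eps Q0) n)) <= 2 * (rb ((seqQ f eps Q0) n) - ra ((seqQ f eps Q0) n)) * (eps * s) + 2 * (rd ((seqQ f eps Q0) n) - rc ((seqQ f eps Q0) n)) * (eps * s)).
    { unfold RIQ. apply (cdiff_bound_to_RI f _ _ _ _ (al, ga) l).
      apply Hvn. apply Hvn. eapply rcont_sub; eauto.
      intros x y Hx Hy.
      assert (Cmod ((x, y) - (al, ga))%C <= s).
      { eapply Rle_trans. apply Cmod_pt_diff. specialize (Ha1 n); specialize (Ha2 n); specialize (Hg1 n); specialize (Hg2 n).
        unfold s. apply Rplus_le_compat; apply Rabs_le; lra. }
      eapply Rle_trans. apply Hdl. lra.
      apply Rmult_le_compat_l; lra. }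
    assert (mu ((seqQ f eps Q0) n) = s * s) by (unfold mu, s; ring).
    assert (2 * (rb (seqQ f eps Q0 n) - ra (seqQ f eps Q0 n)) * (eps * s) +
      2 * (rd (seqQ f eps Q0 n) - rc (seqQ f eps Q0 n)) * (eps * s) = 2 * eps * (s * s)) by (unfold s; ring).
    rewrite H in Hbn. lra. }
  assert (Cmod (RIQ f Q0) = 0).
  { pose proof (Cmod_ge_0 (RIQ f Q0)). destruct (Rle_lt_or_eq_dec 0 _ H); auto.
    assert (Hmu : 0 <= mu Q0) by (unfold mu; apply pow2_ge_0).
    set (e := Cmod (RIQ f Q0) / (4 * (mu Q0 + 1))).
    assert (He : 0 < e) by (apply Rdiv_lt_0_compat; lra).
    specialize (Good e He).
    assert (e * (4 * (mu Q0 + 1)) = Cmod (RIQ f Q0)) by (unfold e; field; lra).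
    nra. }
  apply Cmod_eq_0. exact H.
Qed.

Theorem goursat_exc f a b c d x0 y0 : a < x0 < b -> c < y0 < d -> rcont f a b c d ->
  (forall x y, a <= x <= b -> c <= y <= d -> (x, y) <> (x0, y0) -> exists l, cdiff f (x, y) l) ->
  RI f a b c d = RtoC 0.
Proof.
  intros Hx0 Hy0 Hc Hd.
  assert (Main : forall del, 0 < del -> del < x0 - a -> del < b - x0 -> del < y0 - c -> del < d - y0 ->
     RI f a b c d = RI f (x0 - del) (x0 + del) (y0 - del) (y0 + del)).
  { intros del Hdel H1 H2 H3 H4.
    rewrite (RI_split_x f a (x0 - del) b) by (auto; lra).
    rewrite (RI_split_x f (x0 - del) (x0 + del) b) by (try lra; intros x y Hx Hy; apply Hc; lra).
    rewrite (goursat f a (x0 - del) c d) by (try lra; intros x y Hx Hy; apply Hd; try lra; intros E; injection E; lra).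
    rewrite (goursat f (x0 + del) b c d) by (try lra; intros x y Hx Hy; apply Hd; try lra; intros E; injection E; lra).
    rewrite (RI_split_y f (x0 - del) (x0 + del) c (y0 - del) d) by (try lra; intros x y Hx Hy; apply Hc; lra).
    rewrite (RI_split_y f (x0 - del) (x0 + del) (y0 - del) (y0 + del) d) by (try lra; intros x y Hx Hy; apply Hc; lra).
    rewrite (goursat f (x0 - del) (x0 + del) c (y0 - del)) by (try lra; intros x y Hx Hy; apply Hd; try lra; intros E; injection E; lra).
    rewrite (goursat f (x0 - del) (x0 + del) (y0 + del) d) by (try lra; intros x y Hx Hy; apply Hd; try lra; intros E; injection E; lra).
    ring. }
  assert (Hb : forall eta, 0 < eta -> Cmod (RI f a b c d) <= 8 * eta).
  { intros eta Heta.
    destruct (Hc x0 y0 ltac:(lra) ltac:(lra) eta Heta) as [d1 [Hd1 Hf1]].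
    set (del := Rmin (Rmin (Rmin ((x0 - a)/2) ((b - x0)/2)) (Rmin ((y0 - c)/2) ((d - y0)/2))) (Rmin (d1 / 4) 1)).
    assert (Hd0 : 0 < del) by (unfold del; repeat apply Rmin_pos; lra).
    assert (del <= (x0 - a)/2) by (unfold del; eapply Rle_trans; [apply Rmin_l|]; eapply Rle_trans; [apply Rmin_l|]; apply Rmin_l).
    assert (del <= (b - x0)/2) by (unfold del; eapply Rle_trans; [apply Rmin_l|]; eapply Rle_trans; [apply Rmin_l|]; apply Rmin_r).
    assert (del <= (y0 - c)/2) by (unfold del; eapply Rle_trans; [apply Rmin_l|]; eapply Rle_trans; [apply Rmin_r|]; apply Rmin_l).
    assert (del <= (d - y0)/2) by (unfold del; eapply Rle_trans; [apply Rmin_l|]; eapply Rle_trans; [apply Rmin_r|]; apply Rmin_r).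
    assert (del <= d1/4) by (unfold del; eapply Rle_trans; [apply Rmin_r|]; apply Rmin_l).
    assert (del <= 1) by (unfold del; eapply Rle_trans; [apply Rmin_r|]; apply Rmin_r).
    clearbody del.
    rewrite (Main del) by lra.
    eapply Rle_trans.
    apply (cdiff_bound_to_RI f _ _ _ _ (x0, y0) (RtoC 0) eta); try lra.
    { intros x y Hx Hy. apply Hc; lra. }
    { intros x y Hx Hy. replace (f (x, y) - f (x0, y0) - RtoC 0 * ((x, y) - (x0, y0)))%C with (f (x, y) - f (x0, y0))%C by ring.
      left. apply Hf1. eapply Rle_lt_trans. apply Cmod_pt_diff.
      assert (Rabs (x - x0) <= del) by (apply Rabs_le; lra).
      assert (Rabs (y - y0) <= del) by (apply Rabs_le; lra). lra. }
    nra. }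
  apply Cmod_eq_0. pose proof (Cmod_ge_0 (RI f a b c d)).
  destruct (Rle_lt_or_eq_dec 0 _ H); auto.
  specialize (Hb (Cmod (RI f a b c d) / 16) ltac:(lra)). lra.
Qed.



Lemma Cminus_self (z : C) : (z - z)%C = RtoC 0.
Proof. ring. Qed.

Lemma cd_ext_loc f g z l d : 0 < d -> (forall w, Cmod (w - z) < d -> f w = g w) -> cd f z l -> cd g z l.
Proof.
  intros Hd E H. apply is_derive_cdiff. apply is_derive_cdiff in H.
  intros e He. destruct (H e He) as [d1 [Hd1 H1]]. exists (Rmin d d1). split. apply Rmin_pos; auto.
  intros w Hw. rewrite <- !E.
  - apply H1. eapply Rlt_le_trans; [exact Hw|apply Rmin_r].
  - rewrite Cminus_self, Cmod_0. auto.
  - eapply Rlt_le_trans; [exact Hw|apply Rmin_l].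
Qed.

Lemma ccont_comp g f z : ccont f z -> ccont g (f z) -> ccont (fun w => g (f w)) z.
Proof.
  intros Hf Hg e He. destruct (Hg e He) as [d1 [Hd1 H1]].
  destruct (Hf d1 Hd1) as [d2 [Hd2 H2]]. exists d2; split; auto.
Qed.

Lemma ccont_mult f g z : ccont f z -> ccont g z -> ccont (fun w => f w * g w)%C z.
Proof.
  intros Hf Hg e He.
  set (A := Cmod (f z) + 1). set (B := Cmod (g z) + 1).
  assert (HA : 0 < A) by (unfold A; pose proof (Cmod_ge_0 (f z)); lra).
  assert (HB : 0 < B) by (unfold B; pose proof (Cmod_ge_0 (g z)); lra).
  set (e1 := Rmin 1 (e / (2 * B))). set (e2 := e / (2 * A)).
  assert (He1 : 0 < e1) by (unfold e1; apply Rmin_pos; [lra|]; apply Rdiv_lt_0_compat; lra).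
  assert (He2 : 0 < e2) by (unfold e2; apply Rdiv_lt_0_compat; lra).
  destruct (Hf e1 He1) as [d1 [Hd1 H1]]. destruct (Hg e2 He2) as [d2 [Hd2 H2]].
  exists (Rmin d1 d2). split. apply Rmin_pos; auto. intros w Hw.
  specialize (H1 w ltac:(eapply Rlt_le_trans; [exact Hw|apply Rmin_l])).
  specialize (H2 w ltac:(eapply Rlt_le_trans; [exact Hw|apply Rmin_r])).
  replace (f w * g w - f z * g z)%C with ((f w - f z) * g z + f w * (g w - g z))%C by ring.
  eapply Rle_lt_trans. apply Cmod_triangle. rewrite !Cmod_mult.
  assert (Hfw : Cmod (f w) <= A).
  { unfold A. replace (f w) with ((f w - f z) + f z)%C by ring.
    eapply Rle_trans. apply Cmod_triangle. assert (e1 <= 1) by apply Rmin_l. lra. }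
  assert (Hgz : Cmod (g z) <= B) by (unfold B; lra).
  assert (e1 <= e / (2 * B)) by apply Rmin_r.
  assert (E1 : e / (2 * B) * B = e / 2) by (field; lra).
  assert (E2 : e2 * A = e / 2) by (unfold e2; field; lra).
  pose proof (Cmod_ge_0 (f w - f z)). pose proof (Cmod_ge_0 (g w - g z)).
  pose proof (Cmod_ge_0 (f w)). pose proof (Cmod_ge_0 (g z)).
  assert (Cmod (f w - f z) * Cmod (g z) <= e / 2).
  { apply Rle_trans with (e1 * B). apply Rmult_le_compat; lra. nra. }
  assert (Cmod (f w) * Cmod (g w - g z) < e / 2).
  { apply Rle_lt_trans with (A * Cmod (g w - g z)). apply Rmult_le_compat_r; lra.
    rewrite <- E2. rewrite Rmult_comm. apply Rmult_lt_compat_r; lra. }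
  lra.
Qed.

Lemma RInt_C_pair (F : R -> C) a b : @ex_RInt C_R_CompleteNormedModule F a b ->
  @RInt C_R_CompleteNormedModule F a b = (RInt (fun t => fst (F t)) a b, RInt (fun t => snd (F t)) a b).
Proof.
  intros H. apply (@RInt_correct C_R_CompleteNormedModule) in H.
  pose proof (@is_RInt_fct_extend_fst R_NormedModule R_NormedModule F a b _ H) as H1.
  pose proof (@is_RInt_fct_extend_snd R_NormedModule R_NormedModule F a b _ H) as H2.
  assert (E1 : RInt (fun t => fst (F t)) a b = fst (@RInt C_R_CompleteNormedModule F a b)) by (apply is_RInt_unique; exact H1).
  assert (E2 : RInt (fun t => snd (F t)) a b = snd (@RInt C_R_CompleteNormedModule F a b)) by (apply is_RInt_unique; exact H2).
  rewrite E1, E2. destruct (@RInt C_R_CompleteNormedModule F a b); reflexivity.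
Qed.


Lemma ex_RInt_Rscal (k : R) (g : R -> R) a b : ex_RInt g a b -> ex_RInt (fun t => k * g t) a b.
Proof. intros H. exact (ex_RInt_scal g a b k H). Qed.

Lemma RInt_Rscal (k : R) (g : R -> R) a b : ex_RInt g a b -> RInt (fun t => k * g t) a b = k * RInt g a b.
Proof. intros H. exact (RInt_scal g a b k H). Qed.

Lemma ex_RInt_Cscal (v : C) (g : R -> R) a b : ex_RInt g a b ->
  @ex_RInt C_R_CompleteNormedModule (fun t => v * RtoC (g t))%C a b.
Proof.
  intros H. apply (@ex_RInt_fct_extend_pair R_NormedModule R_NormedModule).
  - apply (ex_RInt_ext (fun t => fst v * g t)). intros; unfold Cmult, RtoC; simpl; ring.
    apply ex_RInt_Rscal; auto.
  - apply (ex_RInt_ext (fun t => snd v * g t)). intros; unfold Cmult, RtoC; simpl; ring.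
    apply ex_RInt_Rscal; auto.
Qed.

Lemma RInt_Cscal (v : C) (g : R -> R) a b : ex_RInt g a b ->
  @RInt C_R_CompleteNormedModule (fun t => v * RtoC (g t))%C a b = (v * RtoC (RInt g a b))%C.
Proof.
  intros H. rewrite RInt_C_pair by (apply ex_RInt_Cscal; auto).
  rewrite (RInt_ext (fun t => fst (v * RtoC (g t))%C) (fun t => fst v * g t)) by (intros; unfold Cmult, RtoC; simpl; ring).
  rewrite (RInt_ext (fun t => snd (v * RtoC (g t))%C) (fun t => snd v * g t)) by (intros; unfold Cmult, RtoC; simpl; ring).
  rewrite !RInt_Rscal by auto. unfold Cmult, RtoC; simpl. f_equal; ring.
Qed.

Lemma cexp_pair s t : cexp (s, t) = ((exp s * cos t)%R, (exp s * sin t)%R).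
Proof. reflexivity. Qed.

Lemma Cmod_cexp2 s t : Cmod (cexp (s, t)) = exp s.
Proof. apply Cmod_cexp. Qed.

Lemma cexp_period t : cexp (t, - PI) = cexp (t, PI).
Proof. rewrite !cexp_pair. rewrite cos_neg, sin_neg, sin_PI. f_equal. f_equal. ring. Qed.

Lemma cos_eq1_0 t : - PI <= t <= PI -> cos t = 1 -> t = 0.
Proof.
  intros Ht Hc. pose proof PI_RGT_0.
  destruct (Rle_or_lt 0 t).
  - apply (cos_inj t 0); try lra. rewrite cos_0; auto.
  - assert (- t = 0). { apply (cos_inj (- t) 0); try lra. rewrite cos_neg, cos_0; auto. } lra.
Qed.

Lemma cexp_eq_x x s t : 0 < x -> - PI <= t <= PI -> cexp (s, t) = RtoC x -> s = ln x /\ t = 0.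
Proof.
  intros Hx Ht E.
  assert (Es : exp s = x). { rewrite <- Cmod_cexp2 with (t := t). rewrite E, Cmod_R, Rabs_right; lra. }
  split. rewrite <- Es, ln_exp; auto.
  apply cos_eq1_0; auto. rewrite cexp_pair in E. injection E as E1 E2. rewrite Es in E1.
  apply Rmult_eq_reg_l with x; lra.
Qed.

Definition holoD (F : C -> C) := forall z, Cmod z < 1 -> exists l, cd F z l.
Definition selfD (F : C -> C) := forall z, Cmod z < 1 -> Cmod (F z) < 1.

Definition Nf (F : C -> C) (x : R) (z : C) : C := (RtoC x * F z - z * F (RtoC x))%C.
Definition Dq (F : C -> C) (x : R) (N' : C) (z : C) : C :=
  if Ceq_dec z (RtoC x) then N' else (Nf F x z / (z - RtoC x))%C.
Definition gq (x r : R) (z : C) : C := (/ (RtoC (r * r) - RtoC x * z))%C.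
Definition Kf F x r N' (w : C) : C := (Dq F x N' (cexp w) * gq x r (cexp w))%C.

Lemma cd_Nf F x z lz : cd F z lz -> cd (Nf F x) z (RtoC x * lz - F (RtoC x))%C.
Proof.
  intros H. unfold Nf.
  pose proof (cd_minus _ _ z _ _ (cd_mult (fun _ => RtoC x) F z _ _ (cd_const (RtoC x) z) H)
     (cd_mult (fun w => w) (fun _ => F (RtoC x)) z _ _ (cd_id z) (cd_const (F (RtoC x)) z))) as H1.
  eapply cd_eq. exact H1. cbv beta. ring.
Qed.

Lemma ccont_Dq F x lF : cd F (RtoC x) lF -> ccont (Dq F x (RtoC x * lF - F (RtoC x))%C) (RtoC x).
Proof.
  intros H. apply (cd_Nf F x) in H. apply is_derive_cdiff in H.
  intros e He. destruct (H (e/2) ltac:(lra)) as [d [Hd H1]]. exists d; split; auto.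
  intros w Hw. unfold Dq. destruct (Ceq_dec (RtoC x) (RtoC x)) as [_|n]; [|congruence].
  destruct (Ceq_dec w (RtoC x)) as [->|Hn].
  - rewrite Cminus_self, Cmod_0. lra.
  - specialize (H1 w Hw). assert (Hnx : (w - RtoC x)%C <> RtoC 0) by (intro E; apply Hn; apply (f_equal (fun u => u + RtoC x)%C) in E; ring_simplify in E; auto).
    assert (Nf F x (RtoC x) = RtoC 0) by (unfold Nf; ring).
    rewrite H0 in H1.
    replace (Nf F x w / (w - RtoC x) - (RtoC x * lF - F (RtoC x)))%C with
      ((Nf F x w - RtoC 0 - (RtoC x * lF - F (RtoC x)) * (w - RtoC x)) / (w - RtoC x))%C by (field; auto).
    unfold Cdiv. rewrite Cmod_mult, Cmod_inv by auto.
    assert (0 < Cmod (w - RtoC x)) by (apply Cmod_gt_0; auto).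
    apply Rle_lt_trans with (e / 2). 2: lra.
    apply Rmult_le_reg_r with (Cmod (w - RtoC x)); auto.
    rewrite Rmult_assoc, Rinv_l by lra. lra.
Qed.

Lemma Cmod_sym (a b : C) : Cmod (a - b) = Cmod (b - a).
Proof. replace (a - b)%C with (- (b - a))%C by ring. apply Cmod_opp. Qed.

Lemma Cminus_neq (a b : C) : a <> b -> (a - b)%C <> RtoC 0.
Proof. intros H E. apply H. apply (f_equal (fun u => u + b)%C) in E. ring_simplify in E. auto. Qed.

Lemma cd_Dq F x N' z : z <> RtoC x -> (exists lz, cd F z lz) -> exists l, cd (Dq F x N') z l.
Proof.
  intros Hz [lz Hl]. apply (cd_Nf F x) in Hl.
  assert (Hd : cd (fun w => w - RtoC x)%C z (RtoC 1 - RtoC 0)%C) by (apply cd_minus; [apply cd_id|apply cd_const]).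
  eexists. eapply (cd_ext_loc (fun w => Nf F x w / (w - RtoC x))%C _ z _ (Cmod (z - RtoC x))).
  - apply Cmod_gt_0. apply Cminus_neq; auto.
  - intros w Hw. unfold Dq. destruct (Ceq_dec w (RtoC x)) as [->|]; auto.
    rewrite Cmod_sym in Hw. lra.
  - apply cd_div; [exact Hl | exact Hd | apply Cminus_neq; auto].
Qed.

Lemma cd_gq x r z : (RtoC (r * r) - RtoC x * z)%C <> RtoC 0 -> exists l, cd (gq x r) z l.
Proof.
  intros Hz. unfold gq. eexists. apply (cd_comp Cinv (fun w => RtoC (r * r) - RtoC x * w)%C).
  apply cd_inv; auto.
  apply cd_minus. apply cd_const. apply cd_mult. apply cd_const. apply cd_id.
Qed.

Lemma cd_Kf F x r N' w : cexp w <> RtoC x -> (exists lz, cd F (cexp w) lz) ->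
  (RtoC (r * r) - RtoC x * cexp w)%C <> RtoC 0 -> exists l, cd (Kf F x r N') w l.
Proof.
  intros H1 H2 H3. destruct (cd_Dq F x N' _ H1 H2) as [l1 Hl1]. destruct (cd_gq x r _ H3) as [l2 Hl2].
  unfold Kf. eexists. apply cd_mult; apply cd_comp; eauto; apply cd_cexp.
Qed.

Lemma ccont_Kf F x r lF w : cexp w = RtoC x -> cd F (RtoC x) lF ->
  (RtoC (r * r) - RtoC x * RtoC x)%C <> RtoC 0 ->
  ccont (Kf F x r (RtoC x * lF - F (RtoC x))%C) w.
Proof.
  intros H1 H2 H3. unfold Kf. apply ccont_mult; apply ccont_comp.
  - eapply cd_cont. apply cd_cexp.
  - rewrite H1. apply ccont_Dq; auto.
  - eapply cd_cont. apply cd_cexp.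
  - rewrite H1. destruct (cd_gq x r (RtoC x) H3) as [l Hl]. eapply cd_cont; eauto.
Qed.

Lemma denom_nz x r z : 0 < x -> 0 < r -> Cmod z <= r -> x < r ->
  (RtoC (r * r) - RtoC x * z)%C <> RtoC 0.
Proof.
  intros Hx Hr Hz Hxr E.
  pose proof (Cmod_lower (RtoC (r * r)) (RtoC x * z)%C). rewrite E, Cmod_0, Cmod_mult, !Cmod_R in H.
  rewrite (Rabs_right (r * r)) in H by nra. rewrite Rabs_right in H by lra.
  pose proof (Cmod_ge_0 z). nra.
Qed.

Lemma cexp_lnx x : 0 < x -> cexp (ln x, 0) = RtoC x.
Proof. intros Hx. rewrite cexp_pair, exp_ln, cos_0, sin_0 by auto. unfold RtoC. f_equal; ring. Qed.

Lemma strip_identity F x r lF s1 : holoD F -> 0 < x < r -> r < 1 -> cd F (RtoC x) lF -> s1 < ln x ->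
  RIv (Kf F x r (RtoC x * lF - F (RtoC x))%C) (- PI) PI (ln r) =
  RIv (Kf F x r (RtoC x * lF - F (RtoC x))%C) (- PI) PI s1.
Proof.
  intros HF Hxr Hr1 HlF Hs1.
  set (K := Kf F x r (RtoC x * lF - F (RtoC x))%C).
  pose proof PI_RGT_0 as Hpi.
  assert (Hlr : ln x < ln r) by (apply ln_increasing; lra).
  assert (Hder : forall s t, s1 <= s <= ln r -> - PI <= t <= PI -> (s, t) <> (ln x, 0) -> exists l, cdiff K (s, t) l).
  { intros s t Hs Ht Hn.
    assert (Hm : Cmod (cexp (s, t)) <= r).
    { rewrite Cmod_cexp2. rewrite <- (exp_ln r) by lra. destruct (Req_dec s (ln r)) as [->|]; [lra|].
      left. apply exp_increasing. lra. }
    destruct (cd_Kf F x r (RtoC x * lF - F (RtoC x))%C (s, t)) as [l Hl].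
    - intros E. apply cexp_eq_x in E; try lra. apply Hn. destruct E as [-> ->]. auto.
    - apply HF. lra.
    - apply denom_nz; lra.
    - exists l. apply is_derive_cdiff. exact Hl. }
  assert (Hc : rcont K s1 (ln r) (- PI) PI).
  { intros s t Hs Ht. destruct (classic ((s, t) = (ln x, 0))) as [E|E].
    - rewrite E. apply ccont_Kf; auto. apply cexp_lnx; lra. apply denom_nz; try lra. rewrite Cmod_R, Rabs_right; lra.
    - destruct (Hder s t Hs Ht E) as [l Hl]. eapply cdiff_cont; eauto. }
  pose proof (goursat_exc K s1 (ln r) (- PI) PI (ln x) 0 ltac:(lra) ltac:(lra) Hc ltac:(intros; apply Hder; auto)) as H0.
  unfold RI in H0.
  assert (E : RIh K s1 (ln r) (- PI) = RIh K s1 (ln r) PI).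
  { unfold RIh. apply (@RInt_ext C_R_CompleteNormedModule). intros t _. unfold K, Kf. rewrite cexp_period. reflexivity. }
  rewrite E in H0.
  assert (Ci * (RIv K (- PI) PI (ln r) - RIv K (- PI) PI s1) = RtoC 0)%C by (rewrite <- H0; ring).
  apply (f_equal Cmod) in H. rewrite Cmod_mult, Cmod_Ci, Cmod_0, Rmult_1_l in H. apply Cmod_eq_0 in H.
  apply (f_equal (fun u => u + RIv K (- PI) PI s1)%C) in H. ring_simplify in H. auto.
Qed.

Lemma K_small F x r lF : holoD F -> selfD F -> F (RtoC 0) = RtoC 0 -> 0 < x < r -> r < 1 ->
  forall eps, 0 < eps -> exists s1, s1 < ln x /\
   forall t, Cmod (Kf F x r (RtoC x * lF - F (RtoC x))%C (s1, t)) <= eps.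
Proof.
  intros HF HS H0 Hxr Hr1 eps Heps.
  destruct (HF (RtoC 0) ltac:(rewrite Cmod_0; lra)) as [l0 Hl0].
  pose proof (cd_cont _ _ _ Hl0) as Hc0.
  assert (Hr2 : 0 < r * r) by nra.
  destruct (Hc0 (eps * (r * r) / 8) ltac:(apply Rdiv_lt_0_compat; nra)) as [d [Hd Hdd]].
  set (rho := Rmin (Rmin (x / 2) (d / 2)) (eps * x * (r * r) / 8)).
  assert (Hrho : 0 < rho) by (unfold rho; repeat apply Rmin_pos; try lra; apply Rdiv_lt_0_compat; try lra; apply Rmult_lt_0_compat; nra).
  assert (R1 : rho <= x / 2) by (unfold rho; eapply Rle_trans; [apply Rmin_l|apply Rmin_l]).
  assert (R2 : rho <= d / 2) by (unfold rho; eapply Rle_trans; [apply Rmin_l|apply Rmin_r]).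
  assert (R3 : rho <= eps * x * (r * r) / 8) by (unfold rho; apply Rmin_r).
  clearbody rho.
  exists (ln rho). split. apply ln_increasing; lra.
  intros t. set (z := cexp (ln rho, t)).
  assert (Hz : Cmod z = rho) by (unfold z; rewrite Cmod_cexp2, exp_ln; auto).
  assert (Hzx : z <> RtoC x). { intros E. rewrite E, Cmod_R, Rabs_right in Hz; lra. }
  unfold Kf. fold z. unfold Dq. destruct (Ceq_dec z (RtoC x)) as [|_]; [contradiction|].
  unfold gq. unfold Cdiv. rewrite !Cmod_mult.
  assert (Hzx' : (z - RtoC x)%C <> RtoC 0) by (apply Cminus_neq; auto).
  assert (Hg : (RtoC (r * r) - RtoC x * z)%C <> RtoC 0) by (apply denom_nz; lra).
  rewrite !Cmod_inv by auto.
  assert (A1 : Cmod (Nf F x z) <= x * (eps * (r * r) / 8) + rho).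
  { unfold Nf. eapply Rle_trans. unfold Cminus. apply Cmod_triangle. rewrite Cmod_opp, !Cmod_mult, Cmod_R, Rabs_right by lra.
    assert (Cmod (F z) < eps * (r * r) / 8).
    { replace (F z) with (F z - F (RtoC 0))%C by (rewrite H0; ring). apply Hdd.
      replace (z - RtoC 0)%C with z by ring. lra. }
    assert (Cmod (F (RtoC x)) < 1) by (apply HS; rewrite Cmod_R, Rabs_right; lra).
    rewrite Hz. pose proof (Cmod_ge_0 (F z)). pose proof (Cmod_ge_0 (F (RtoC x))). nra. }
  assert (A2 : x / 2 <= Cmod (z - RtoC x)).
  { rewrite Cmod_sym. pose proof (Cmod_lower (RtoC x) z). rewrite Cmod_R, Rabs_right in H by lra. lra. }
  assert (A3 : r * r / 2 <= Cmod (RtoC (r * r) - RtoC x * z)).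
  { pose proof (Cmod_lower (RtoC (r * r)) (RtoC x * z)). rewrite Cmod_mult, !Cmod_R, Rabs_right, (Rabs_right x) in H by nra.
    rewrite Hz in H. nra. }
  pose proof (Cmod_ge_0 (Nf F x z)).
  assert (Hp1 : 0 < Cmod (z - RtoC x)) by lra.
  assert (Hp2 : 0 < Cmod (RtoC (r * r) - RtoC x * z)) by nra.
  apply Rle_trans with ((x * (eps * (r * r) / 8) + rho) * (2 / x) * (2 / (r * r))).
  - apply Rmult_le_compat. apply Rmult_le_pos; [lra| left; apply Rinv_0_lt_compat; lra].
    left; apply Rinv_0_lt_compat; lra.
    apply Rmult_le_compat; try lra. left; apply Rinv_0_lt_compat; lra.
    replace (2 / x) with (/ (x / 2)) by (field; lra). apply Rinv_le_contravar; lra.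
    replace (2 / (r * r)) with (/ (r * r / 2)) by (field; lra). apply Rinv_le_contravar; lra.
  - replace ((x * (eps * (r * r) / 8) + rho) * (2 / x) * (2 / (r * r))) with
      ((x * (eps * (r * r) / 8) + rho) * 4 / (x * (r * r))) by (field; lra).
    apply Rle_trans with ((x * (eps * (r * r) / 8) + eps * x * (r * r) / 8) * 4 / (x * (r * r))).
    + apply Rmult_le_compat_r. left; apply Rinv_0_lt_compat; nra. lra.
    + right. field. lra.
Qed.

Lemma circle_zero F x r lF : holoD F -> selfD F -> F (RtoC 0) = RtoC 0 -> 0 < x < r -> r < 1 ->
  cd F (RtoC x) lF -> RIv (Kf F x r (RtoC x * lF - F (RtoC x))%C) (- PI) PI (ln r) = RtoC 0.
Proof.
  intros HF HS H0 Hxr Hr1 HlF.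
  pose proof PI_RGT_0 as Hpi.
  assert (B : forall eps, 0 < eps -> Cmod (RIv (Kf F x r (RtoC x * lF - F (RtoC x))%C) (- PI) PI (ln r)) <= (PI - - PI) * eps).
  { intros eps Heps. destruct (K_small F x r lF HF HS H0 Hxr Hr1 eps Heps) as [s1 [Hs1 Hb]].
    rewrite (strip_identity F x r lF s1) by auto.
    assert (Hs1' : exp s1 < x) by (rewrite <- (exp_ln x) by lra; apply exp_increasing; auto).
    apply RInt_norm_bound. lra.
    - apply exv. lra. intros t Ht.
      destruct (cd_Kf F x r (RtoC x * lF - F (RtoC x))%C (s1, t)) as [l Hl].
      + intros E. apply (f_equal Cmod) in E. rewrite Cmod_cexp2, Cmod_R, Rabs_right in E; lra.
      + apply HF. rewrite Cmod_cexp2. lra.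
      + apply denom_nz; try lra. rewrite Cmod_cexp2. lra.
      + eapply cd_cont; eauto.
    - intros t _. apply Hb. }
  apply Cmod_eq_0. pose proof (Cmod_ge_0 (RIv (Kf F x r (RtoC x * lF - F (RtoC x))%C) (- PI) PI (ln r))).
  destruct (Rle_lt_or_eq_dec 0 _ H); auto.
  specialize (B (Cmod (RIv (Kf F x r (RtoC x * lF - F (RtoC x))%C) (- PI) PI (ln r)) / (4 * PI))).
  assert (0 < Cmod (RIv (Kf F x r (RtoC x * lF - F (RtoC x))%C) (- PI) PI (ln r)) / (4 * PI)) by (apply Rdiv_lt_0_compat; lra).
  specialize (B H1).
  replace ((PI - - PI) * (Cmod (RIv (Kf F x r (RtoC x * lF - F (RtoC x))%C) (- PI) PI (ln r)) / (4 * PI)))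
    with (Cmod (RIv (Kf F x r (RtoC x * lF - F (RtoC x))%C) (- PI) PI (ln r)) / 2) in B by (field; lra).
  lra.
Qed.

Definition Pk (x r t : R) : R := / ((r * cos t - x) ^ 2 + (r * sin t) ^ 2).

Lemma Pk_den_pos x r t : 0 < x < r -> 0 < (r * cos t - x) ^ 2 + (r * sin t) ^ 2.
Proof.
  intros H. pose proof (sin2_cos2 t). unfold Rsqr in H0.
  assert ((r * cos t - x) ^ 2 + (r * sin t) ^ 2 = r * r - 2 * r * x * cos t + x * x) by (simpl; nra).
  pose proof (COS_bound t). assert (0 <= r * x * (1 - cos t)) by (apply Rmult_le_pos; nra).
  assert (0 < (r - x) * (r - x)) by nra. nra.
Qed.

Lemma Pk_cont x r t : 0 < x < r -> continuous (Pk x r) t.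
Proof.
  intros H. apply (@ex_derive_continuous R_AbsRing R_NormedModule). unfold Pk. auto_derive.
  pose proof (Pk_den_pos x r t H). simpl in H0. lra.
Qed.

Lemma ex_RInt_Pk x r a b : 0 < x < r -> ex_RInt (Pk x r) a b.
Proof. intros H. apply (@ex_RInt_continuous R_CompleteNormedModule). intros; apply Pk_cont; auto. Qed.

Lemma circle_point x r t : 0 < x < r ->
  let z := cexp (ln r, t) in
  z = ((r * cos t)%R, (r * sin t)%R) /\ Cmod z = r /\ (z * Cconj z)%C = RtoC (r * r) /\
  ((z - RtoC x) * (Cconj z - RtoC x))%C = RtoC ((r * cos t - x) ^ 2 + (r * sin t) ^ 2).
Proof.
  intros H z. assert (Ez : z = ((r * cos t)%R, (r * sin t)%R)) by (unfold z; rewrite cexp_pair, exp_ln by lra; reflexivity).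
  split; auto. split. unfold z; rewrite Cmod_cexp2, exp_ln; lra.
  pose proof (sin2_cos2 t). unfold Rsqr in H0.
  rewrite Ez. unfold Cconj, Cmult, Cminus, Cplus, Copp, RtoC; simpl. split; f_equal; nra.
Qed.

Lemma K_circle F x r N' t : 0 < x < r ->
  Kf F x r N' (ln r, t) = ((RtoC x * F (cexp (ln r, t)) / cexp (ln r, t) - F (RtoC x)) * RtoC (Pk x r t))%C.
Proof.
  intros H. destruct (circle_point x r t H) as [Ez [Hm [E1 E2]]].
  set (z := cexp (ln r, t)) in *.
  assert (Hzx : z <> RtoC x). { intros E. rewrite E, Cmod_R, Rabs_right in Hm; lra. }
  assert (Hz0 : z <> RtoC 0). { intros E. rewrite E, Cmod_0 in Hm; lra. }
  pose proof (Pk_den_pos x r t H) as Hd.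
  assert (Hzb : (Cconj z - RtoC x)%C <> RtoC 0).
  { intros E. rewrite E, Cmult_0_r in E2. apply RtoC_inj in E2. lra. }
  assert (Hzx' : (z - RtoC x)%C <> RtoC 0) by (apply Cminus_neq; auto).
  unfold Kf. fold z. unfold Dq. destruct (Ceq_dec z (RtoC x)) as [|_]; [contradiction|].
  unfold gq, Pk, Nf. rewrite RtoC_inv by lra. rewrite <- E1, <- E2.
  field. split; [auto|split; [auto|split; [auto|]]]. replace (z * Cconj z - RtoC x * z)%C with (z * (Cconj z - RtoC x))%C by ring. apply Cmult_neq_0; auto.
Qed.

Lemma C_sub_add (a b : C) : (a - b + b)%C = a.
Proof. ring. Qed.

Lemma schwarz_xr F x r : holoD F -> selfD F -> F (RtoC 0) = RtoC 0 -> 0 < x < r -> r < 1 ->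
  Cmod (F (RtoC x)) <= x / r.
Proof.
  intros HF HS H0 Hxr Hr1.
  destruct (HF (RtoC x) ltac:(rewrite Cmod_R, Rabs_right; lra)) as [lF HlF].
  pose proof (circle_zero F x r lF HF HS H0 Hxr Hr1 HlF) as Hz.
  set (K := Kf F x r (RtoC x * lF - F (RtoC x))%C) in *.
  pose proof PI_RGT_0 as Hpi.
  set (zf := fun t => cexp (ln r, t)).
  set (A := fun t => (RtoC x * F (zf t) / zf t * RtoC (Pk x r t))%C).
  set (B := fun t => (F (RtoC x) * RtoC (Pk x r t))%C).
  assert (HK : forall t, K (ln r, t) = (A t - B t)%C).
  { intros t. unfold K, A, B, zf. rewrite K_circle by auto. ring. }
  assert (HexK : @ex_RInt C_R_CompleteNormedModule (fun t => K (ln r, t)) (- PI) PI).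
  { apply exv. lra. intros t Ht. destruct (circle_point x r t Hxr) as [_ [Hm _]].
    destruct (cd_Kf F x r (RtoC x * lF - F (RtoC x))%C (ln r, t)) as [l Hl].
    + intros E. rewrite E, Cmod_R, Rabs_right in Hm; lra.
    + apply HF. lra.
    + apply denom_nz; lra.
    + eapply cd_cont; eauto. }
  assert (HexB : @ex_RInt C_R_CompleteNormedModule B (- PI) PI) by (apply ex_RInt_Cscal, ex_RInt_Pk; auto).
  assert (HexA : @ex_RInt C_R_CompleteNormedModule A (- PI) PI).
  { apply (@ex_RInt_ext C_R_NormedModule (fun t => plus (K (ln r, t)) (B t))).
    intros t _. rewrite HK. exact (C_sub_add (A t) (B t)).
    apply (@ex_RInt_plus C_R_NormedModule); auto. }
  assert (EA : @RInt C_R_CompleteNormedModule A (- PI) PI = (F (RtoC x) * RtoC (RInt (Pk x r) (- PI) PI))%C).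
  { rewrite (@RInt_ext C_R_CompleteNormedModule A (fun t => plus (K (ln r, t)) (B t))).
    rewrite (@RInt_plus C_R_CompleteNormedModule (fun t => K (ln r, t)) B) by auto.
    unfold RIv in Hz. rewrite Hz. unfold B. rewrite RInt_Cscal by (apply ex_RInt_Pk; auto).
    exact (Cplus_0_l (F (RtoC x) * RtoC (RInt (Pk x r) (- PI) PI))%C).
    intros t _. rewrite HK. symmetry. exact (C_sub_add (A t) (B t)). }
  set (J := RInt (Pk x r) (- PI) PI) in *.
  assert (HJ : 0 < J).
  { apply RInt_gt_0. lra. intros t _. unfold Pk. apply Rinv_0_lt_compat, Pk_den_pos; auto.
    intros; apply Pk_cont; auto. }
  assert (Hb : Cmod (@RInt C_R_CompleteNormedModule A (- PI) PI) <= x / r * J).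
  { rewrite <- normCR. unfold J. rewrite <- RInt_Rscal by (apply ex_RInt_Pk; auto).
    apply (@norm_RInt_le C_R_NormedModule A (fun t => x / r * Pk x r t) (- PI) PI).
    lra.
    - intros t _. rewrite normCR. unfold A, zf.
      destruct (circle_point x r t Hxr) as [_ [Hm _]].
      assert (Hz0 : cexp (ln r, t) <> RtoC 0) by (intros E; rewrite E, Cmod_0 in Hm; lra).
      unfold Cdiv. rewrite !Cmod_mult, Cmod_inv, Hm, !Cmod_R by auto.
      assert (HP : 0 < Pk x r t) by (apply Rinv_0_lt_compat, Pk_den_pos; auto).
      rewrite (Rabs_right x), (Rabs_right (Pk x r t)) by lra.
      assert (Cmod (F (cexp (ln r, t))) < 1) by (apply HS; lra).
      pose proof (Cmod_ge_0 (F (cexp (ln r, t)))).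
      assert (0 < / r) by (apply Rinv_0_lt_compat; lra).
      unfold Rdiv. assert (0 < x * / r * Pk x r t) by (repeat apply Rmult_lt_0_compat; lra).
      replace (x * Cmod (F (cexp (ln r, t))) * / r * Pk x r t) with ((x * / r * Pk x r t) * Cmod (F (cexp (ln r, t)))) by ring.
      rewrite <- (Rmult_1_r (x * / r * Pk x r t)) at 2. apply Rmult_le_compat_l; lra.
    - apply (@RInt_correct C_R_CompleteNormedModule); auto.
    - apply (@RInt_correct R_CompleteNormedModule). apply ex_RInt_Rscal, ex_RInt_Pk; auto. }
  rewrite EA, Cmod_mult, Cmod_R, Rabs_right in Hb by lra.
  apply Rmult_le_reg_r with J; auto.
Qed.

Theorem schwarz F : holoD F -> selfD F -> F (RtoC 0) = RtoC 0 ->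
  forall z, Cmod z < 1 -> Cmod (F z) <= Cmod z.
Proof.
  intros HF HS H0 z Hz.
  destruct (Ceq_dec z (RtoC 0)) as [->|Hz0].
  { rewrite H0, Cmod_0. lra. }
  set (x := Cmod z).
  assert (Hx : 0 < x) by (apply Cmod_gt_0; auto).
  set (lam := (z / RtoC x)%C).
  assert (Hxn : RtoC x <> RtoC 0) by (intros E; apply RtoC_inj in E; lra).
  assert (Hlam : Cmod lam = 1) by (unfold lam; rewrite Cmod_div, Cmod_R, Rabs_right by (auto; lra); fold x; field; lra).
  set (G := fun w => F (lam * w)%C).
  assert (HG : holoD G).
  { intros w Hw. destruct (HF (lam * w)%C) as [l Hl]. rewrite Cmod_mult, Hlam; lra.
    eexists. unfold G. apply (cd_comp F (fun w => lam * w)%C w); eauto.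
    apply cd_mult. apply cd_const. apply cd_id. }
  assert (HSG : selfD G) by (intros w Hw; unfold G; apply HS; rewrite Cmod_mult, Hlam; lra).
  assert (HG0 : G (RtoC 0) = RtoC 0) by (unfold G; rewrite Cmult_0_r; auto).
  assert (Ez : G (RtoC x) = F z) by (unfold G, lam; f_equal; field; auto).
  assert (Hb : forall r, x < r < 1 -> Cmod (F z) <= x / r).
  { intros r Hr. rewrite <- Ez. apply schwarz_xr; auto; lra. }
  apply Rnot_lt_le. intros Hc. fold x in Hc.
  assert (HFz : Cmod (F z) < 1) by (apply HS; auto).
  set (r := (Rmax x (x / Cmod (F z)) + 1) / 2).
  assert (Hfz0 : 0 < Cmod (F z)) by lra.
  assert (x / Cmod (F z) < 1) by (apply Rmult_lt_reg_r with (Cmod (F z)); [lra|]; unfold Rdiv; rewrite Rmult_assoc, Rinv_l, Rmult_1_r, Rmult_1_l by lra; lra).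
  assert (Hr1 : x < r) by (unfold r; pose proof (Rmax_l x (x / Cmod (F z))); lra).
  assert (Hr2 : r < 1) by (unfold r; apply Rmax_case_strong; intros; lra).
  assert (Hr3 : x / Cmod (F z) < r) by (unfold r; pose proof (Rmax_r x (x / Cmod (F z))); lra).
  specialize (Hb r (conj Hr1 Hr2)).
  assert (x < Cmod (F z) * r).
  { apply Rmult_lt_compat_l with (r := Cmod (F z)) in Hr3; auto.
    replace (Cmod (F z) * (x / Cmod (F z))) with x in Hr3 by (field; lra). lra. }
  assert (Cmod (F z) * r <= x).
  { apply Rmult_le_compat_r with (r := r) in Hb; [|lra]. replace (x / r * r) with x in Hb by (field; lra). lra. }
  lra.
Qed.

Definition Mob (b z : C) : C := ((z - b) / (1 - Cconj b * z))%C.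

Definition n2 (z : C) : R := fst z * fst z + snd z * snd z.

Lemma Cmod_n2 z : Cmod z = sqrt (n2 z).
Proof. unfold Cmod, n2. f_equal. simpl. ring. Qed.

Lemma Cmod_lt_1 z : Cmod z < 1 <-> n2 z < 1.
Proof.
  rewrite Cmod_n2. unfold n2. split; intros H.
  - rewrite <- sqrt_1 in H. apply sqrt_lt_0_alt in H. auto.
  - rewrite <- sqrt_1. apply sqrt_lt_1_alt. split; [nra|auto].
Qed.

Lemma Cmod_lt_n2 u v : n2 u < n2 v -> Cmod u < Cmod v.
Proof. intros H. rewrite !Cmod_n2. apply sqrt_lt_1_alt. split; auto. unfold n2; nra. Qed.

Lemma mob_den_nz b z : Cmod b < 1 -> Cmod z < 1 -> (1 - Cconj b * z)%C <> RtoC 0.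
Proof.
  intros Hb Hz E. pose proof (Cmod_lower (RtoC 1) (Cconj b * z)%C). rewrite E, Cmod_0, Cmod_mult, Cmod_conj, Cmod_R, Rabs_R1 in H.
  pose proof (Cmod_ge_0 b). pose proof (Cmod_ge_0 z). nra.
Qed.

Lemma mob_in b z : Cmod b < 1 -> Cmod z < 1 -> Cmod (Mob b z) < 1.
Proof.
  intros Hb Hz. pose proof (mob_den_nz b z Hb Hz) as Hd.
  unfold Mob. rewrite Cmod_div by auto.
  assert (0 < Cmod (1 - Cconj b * z)%C) by (apply Cmod_gt_0; auto).
  apply Rmult_lt_reg_r with (Cmod (1 - Cconj b * z)%C); auto.
  unfold Rdiv. rewrite Rmult_assoc, Rinv_l, Rmult_1_r, Rmult_1_l by lra.
  apply Cmod_lt_n2. apply Cmod_lt_1 in Hb. apply Cmod_lt_1 in Hz.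
  destruct b as [b1 b2], z as [z1 z2]. unfold n2 in *; simpl in *.
  nra.
Qed.

Lemma mob_inv b z : Cmod b < 1 -> Cmod z < 1 -> Mob (- b) (Mob b z) = z.
Proof.
  intros Hb Hz. pose proof (mob_den_nz b z Hb Hz) as Hd.
  assert (Hbb : (1 - Cconj b * b)%C <> RtoC 0).
  { apply mob_den_nz; auto. }
  unfold Mob. rewrite Copp_conj.
  field. cbv beta. split; [exact Hd|].
  replace (RtoC (IZR 1) - Cconj b * z - - Cconj b * (z - b))%C with (1 - Cconj b * b)%C by ring. exact Hbb.
Qed.

Lemma holo_holoD f : holo_on_D f -> holoD f.
Proof. intros H z Hz. exact (H z Hz). Qed.

Lemma holoD_holo f : holoD f -> holo_on_D f.
Proof. intros H z Hz. exact (H z Hz). Qed.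

Lemma cd_Mob b z : Cmod b < 1 -> Cmod z < 1 -> exists l, cd (Mob b) z l.
Proof.
  intros Hb Hz. eexists. unfold Mob. apply cd_div.
  - apply cd_minus; [apply cd_id| apply cd_const].
  - apply cd_minus; [apply cd_const| apply cd_mult; [apply cd_const| apply cd_id]].
  - apply mob_den_nz; auto.
Qed.

Lemma Mob_self b : Mob b b = RtoC 0.
Proof. unfold Mob. unfold Cdiv. rewrite Cminus_self. ring. Qed.



Lemma Mob_0 b : Mob (- b) (RtoC 0) = b.
Proof.
  unfold Mob. replace (RtoC 1 - Cconj (- b) * RtoC 0)%C with (RtoC 1) by ring.
  replace (RtoC 0 - - b)%C with b by ring. field.
Qed.

Lemma aut_rho phi a : AutD phi -> 0 <= a < 1 ->
  Cmod (Mob (phi (RtoC 0)) (phi (RtoC a))) = a.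
Proof.
  intros [Hh [Hm [psi [Hph [Hpm [Hinv Hr]]]]]] Ha.
  apply holo_holoD in Hh. apply holo_holoD in Hph.
  set (b := phi (RtoC 0)).
  assert (HD0 : inD (RtoC 0)) by (unfold inD; rewrite Cmod_0; lra).
  assert (HDa : inD (RtoC a)) by (unfold inD; rewrite Cmod_R, Rabs_right; lra).
  assert (Hb : Cmod b < 1) by (apply Hm; auto).
  assert (Hpa : Cmod (phi (RtoC a)) < 1) by (apply Hm; auto).
  apply Rle_antisym.
  - set (F1 := fun z => Mob b (phi z)).
    assert (H1 : holoD F1).
    { intros z Hz. destruct (Hh z Hz) as [l Hl]. destruct (cd_Mob b (phi z) Hb (Hm z Hz)) as [l2 Hl2].
      eexists. apply (cd_comp (Mob b) phi z); eauto. }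
    assert (H2 : selfD F1) by (intros z Hz; apply mob_in; auto; apply Hm; auto).
    assert (H3 : F1 (RtoC 0) = RtoC 0) by (unfold F1; apply Mob_self).
    pose proof (schwarz F1 H1 H2 H3 (RtoC a) HDa). unfold F1 in H.
    rewrite Cmod_R, Rabs_right in H by lra. auto.
  - set (F2 := fun w => psi (Mob (- b) w)).
    assert (Hmb : Cmod (- b) < 1) by (rewrite Cmod_opp; auto).
    assert (H1 : holoD F2).
    { intros z Hz. destruct (Hph (Mob (- b) z) (mob_in _ _ Hmb Hz)) as [l Hl].
      destruct (cd_Mob (- b) z Hmb Hz) as [l2 Hl2].
      eexists. apply (cd_comp psi (Mob (- b)) z); eauto. }
    assert (H2 : selfD F2) by (intros z Hz; apply Hpm; apply mob_in; auto).
    assert (H3 : F2 (RtoC 0) = RtoC 0) by (unfold F2; rewrite Mob_0; unfold b; apply Hinv; auto).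
    set (w0 := Mob b (phi (RtoC a))).
    assert (Hw0 : Cmod w0 < 1) by (apply mob_in; auto).
    pose proof (schwarz F2 H1 H2 H3 w0 Hw0).
    unfold F2, w0 in H. rewrite mob_inv in H by auto. rewrite Hinv in H by auto.
    rewrite Cmod_R, Rabs_right in H by lra. auto.
Qed.

Lemma mob_inv' v y : Cmod v < 1 -> Cmod y < 1 -> Mob v (Mob (- v) y) = y.
Proof.
  intros Hv Hy. pose proof (mob_inv (- v) y ltac:(rewrite Cmod_opp; auto) Hy).
  replace (- - v)%C with v in H by ring. auto.
Qed.

Lemma aut_mk v lam : Cmod v < 1 -> Cmod lam = 1 -> AutD (fun z => Mob (- v) (lam * z))%C.
Proof.
  intros Hv Hl.
  assert (Hmv : Cmod (- v) < 1) by (rewrite Cmod_opp; auto).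
  assert (Hl0 : lam <> RtoC 0) by (intros E; rewrite E, Cmod_0 in Hl; lra).
  assert (Hin : forall z, Cmod z < 1 -> Cmod (lam * z)%C < 1) by (intros z Hz; rewrite Cmod_mult, Hl; lra).
  split; [|split].
  - apply holoD_holo. intros z Hz. destruct (cd_Mob (- v) (lam * z)%C Hmv (Hin z Hz)) as [l Hl'].
    eexists. apply (cd_comp (Mob (- v)) (fun z => lam * z)%C z); eauto.
    apply cd_mult; [apply cd_const|apply cd_id].
  - intros z Hz. apply mob_in; auto.
  - exists (fun w => Mob v w / lam)%C. split; [|split; [|split]].
    + apply holoD_holo. intros w Hw. destruct (cd_Mob v w Hv Hw) as [l Hl'].
      eexists. apply cd_div; [exact Hl'| apply cd_const| auto].
    + intros w Hw. unfold inD. rewrite Cmod_div, Hl by auto. unfold Rdiv. rewrite Rinv_1, Rmult_1_r. apply mob_in; auto.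
    + intros z Hz. rewrite mob_inv' by auto. field. auto.
    + intros w Hw. replace (lam * (Mob v w / lam))%C with (Mob v w) by (field; auto). apply mob_inv; auto.
Qed.

Theorem orbit_char a y : 0 <= a < 1 ->
  (orbit_a0 a y <-> exists u v, inD u /\ inD v /\ Cmod (Mob v u) = a /\ y = ((u + v)%C, (u * v)%C)).
Proof.
  intros Ha. split.
  - intros [phi [Haut [z1 [z2 [H1 [H2 [E1 E2]]]]]]].
    apply pair_equal_spec in E1. destruct E1 as [Es Ep].
    pose proof Haut as [_ [Hm _]].
    assert (Hz : z1 = RtoC 0 \/ z2 = RtoC 0).
    { apply (f_equal Cmod) in Ep. rewrite Cmod_R, Rabs_R0, Cmod_mult in Ep.
      destruct (Rmult_integral _ _ (eq_sym Ep)) as [E|E]; apply Cmod_eq_0 in E; auto. }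
    exists (phi (RtoC a)), (phi (RtoC 0)).
    assert (HD0 : inD (RtoC 0)) by (unfold inD; rewrite Cmod_0; lra).
    assert (HDa : inD (RtoC a)) by (unfold inD; rewrite Cmod_R, Rabs_right; lra).
    split; [apply Hm; auto|]. split; [apply Hm; auto|]. split. apply aut_rho; auto.
    destruct Hz as [-> | ->].
    + replace z2 with (RtoC a) in E2 by (rewrite Es; ring). rewrite E2. f_equal; ring.
    + replace z1 with (RtoC a) in E2 by (rewrite Es; ring). rewrite E2. reflexivity.
  - intros [u [v [Hu [Hv [Hr ->]]]]].
    set (w := Mob v u).
    assert (Hw : Cmod w = a) by auto.
    set (lam := if Req_EM_T a 0 then RtoC 1 else (w / RtoC a)%C).
    assert (Hlam : Cmod lam = 1 /\ (lam * RtoC a)%C = w).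
    { unfold lam. destruct (Req_EM_T a 0) as [E|E].
      - rewrite E in *. split. apply Cmod_1. apply Cmod_eq_0 in Hw. rewrite Hw. ring.
      - assert (RtoC a <> RtoC 0) by (intros F; apply RtoC_inj in F; auto).
        split. rewrite Cmod_div, Hw, Cmod_R, Rabs_right by (auto; lra). field; auto.
        field; auto. }
    destruct Hlam as [Hl1 Hl2].
    exists (fun z => Mob (- v) (lam * z))%C. split. apply aut_mk; auto.
    exists (RtoC a), (RtoC 0). split. unfold inD; rewrite Cmod_R, Rabs_right; lra.
    split. unfold inD; rewrite Cmod_0; lra.
    split. f_equal; ring.
    rewrite Hl2. unfold w. rewrite mob_inv by auto. rewrite Cmult_0_r, Mob_0. reflexivity.
Qed.

Section Cont.
Context {U : UniformSpace}.
Lemma cR_plus (f g : U -> R) x : continuous f x -> continuous g x -> continuous (fun y => f y + g y) x.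
Proof. intros. apply (@continuous_plus U R_AbsRing R_NormedModule f g x); auto. Qed.
Lemma cR_mult (f g : U -> R) x : continuous f x -> continuous g x -> continuous (fun y => f y * g y) x.
Proof. intros. apply (@continuous_mult U R_AbsRing f g x); auto. Qed.
Lemma cR_opp (f : U -> R) x : continuous f x -> continuous (fun y => - f y) x.
Proof. intros. apply (@continuous_opp U R_AbsRing R_NormedModule f x); auto. Qed.
Lemma cR_minus (f g : U -> R) x : continuous f x -> continuous g x -> continuous (fun y => f y - g y) x.
Proof. intros. apply cR_plus; auto. apply cR_opp; auto. Qed.
Lemma cR_const (c : R) x : continuous (fun _ : U => c) x.
Proof. apply continuous_const. Qed.
Lemma cR_sqrt (f : U -> R) x : continuous f x -> continuous (fun y => sqrt (f y)) x.
Proof. intros. apply (continuous_comp f sqrt); auto. apply continuous_sqrt. Qed.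
End Cont.

Lemma c_c1 (x : C2) : continuous (fun y : C2 => fst (fst y)) x.
Proof.
  destruct x as [[x1 x2] x3]. apply (continuous_comp (fun y : C2 => fst y) (fun z : C_UniformSpace => fst z)).
  apply continuous_fst. exact (@continuous_fst R_UniformSpace R_UniformSpace x1 x2).
Qed.
Lemma c_c2 (x : C2) : continuous (fun y : C2 => snd (fst y)) x.
Proof.
  destruct x as [[x1 x2] x3]. apply (continuous_comp (fun y : C2 => fst y) (fun z : C_UniformSpace => snd z)).
  apply continuous_fst. exact (@continuous_snd R_UniformSpace R_UniformSpace x1 x2).
Qed.
Lemma c_c3 (x : C2) : continuous (fun y : C2 => fst (snd y)) x.
Proof.
  destruct x as [x3 [x1 x2]]. apply (continuous_comp (fun y : C2 => snd y) (fun z : C_UniformSpace => fst z)).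
  apply continuous_snd. exact (@continuous_fst R_UniformSpace R_UniformSpace x1 x2).
Qed.
Lemma c_c4 (x : C2) : continuous (fun y : C2 => snd (snd y)) x.
Proof.
  destruct x as [x3 [x1 x2]]. apply (continuous_comp (fun y : C2 => snd y) (fun z : C_UniformSpace => snd z)).
  apply continuous_snd. exact (@continuous_snd R_UniformSpace R_UniformSpace x1 x2).
Qed.

Definition Q1 (y : C2) : R :=
  let s1 := fst (fst y) in let s2 := snd (fst y) in let p1 := fst (snd y) in let p2 := snd (snd y) in
  (s1 * s1 - s2 * s2 - 4 * p1) * (s1 * s1 - s2 * s2 - 4 * p1) + (2 * s1 * s2 - 4 * p2) * (2 * s1 * s2 - 4 * p2).

Definition Phi (a : R) (y : C2) : R :=
  let s1 := fst (fst y) in let s2 := snd (fst y) in let p1 := fst (snd y) in let p2 := snd (snd y) in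
  sqrt (Q1 y) - a * a * (1 - (s1 * s1 + s2 * s2 - sqrt (Q1 y)) / 2 + (p1 * p1 + p2 * p2)).

Lemma Phi_cont a x : continuous (Phi a) x.
Proof.
  pose proof (c_c1 x). pose proof (c_c2 x). pose proof (c_c3 x). pose proof (c_c4 x).
  set (f1 := fun y : C2 => fst (fst y)) in *. set (f2 := fun y : C2 => snd (fst y)) in *.
  set (f3 := fun y : C2 => fst (snd y)) in *. set (f4 := fun y : C2 => snd (snd y)) in *.
  assert (HQ : continuous Q1 x).
  { change Q1 with (fun y => (f1 y * f1 y - f2 y * f2 y - 4 * f3 y) * (f1 y * f1 y - f2 y * f2 y - 4 * f3 y) + (2 * f1 y * f2 y - 4 * f4 y) * (2 * f1 y * f2 y - 4 * f4 y)).
    assert (HA : continuous (fun y => f1 y * f1 y - f2 y * f2 y - 4 * f3 y) x).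
    { apply cR_minus. apply cR_minus. apply cR_mult; auto. apply cR_mult; auto. apply cR_mult. apply cR_const. auto. }
    assert (HB : continuous (fun y => 2 * f1 y * f2 y - 4 * f4 y) x).
    { apply cR_minus. apply cR_mult. apply cR_mult. apply cR_const. auto. auto. apply cR_mult. apply cR_const. auto. }
    apply cR_plus; apply cR_mult; auto. }
  change (Phi a) with (fun y => sqrt (Q1 y) - a * a * (1 - (f1 y * f1 y + f2 y * f2 y - sqrt (Q1 y)) * / 2 + (f3 y * f3 y + f4 y * f4 y))).
  apply cR_minus. apply cR_sqrt; auto.
  apply cR_mult. apply cR_const.
  apply cR_plus. apply cR_minus. apply cR_const. apply cR_mult. 2: apply cR_const.
  apply cR_minus. apply cR_plus; apply cR_mult; auto. apply cR_sqrt; auto.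
  apply cR_plus; apply cR_mult; auto.
Qed.

Lemma Phi_closed a : closed (fun y : C2 => Phi a y = 0).
Proof.
  apply (closed_comp (Phi a) (fun t : R => t = 0)).
  intros x. apply Phi_cont. apply closed_eq.
Qed.

Lemma Phi_uv a u v : Phi a ((u + v)%C, (u * v)%C) = n2 (u - v)%C - a * a * n2 (1 - Cconj v * u)%C.
Proof.
  assert (HQ : Q1 ((u + v)%C, (u * v)%C) = n2 (u - v)%C * n2 (u - v)%C).
  { destruct u as [u1 u2], v as [v1 v2]. unfold Q1, n2, Cplus, Cmult, Cminus, Copp; simpl. ring. }
  assert (Hn : 0 <= n2 (u - v)%C) by (unfold n2; nra).
  unfold Phi. rewrite HQ. rewrite sqrt_square by auto.
  destruct u as [u1 u2], v as [v1 v2]. unfold n2, Cplus, Cmult, Cminus, Copp, Cconj, RtoC; simpl. lra.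
Qed.

Lemma n2_nonneg z : 0 <= n2 z.
Proof. unfold n2; nra. Qed.

Lemma Cmod_sq z : Cmod z * Cmod z = n2 z.
Proof. rewrite Cmod_n2. apply sqrt_sqrt. apply n2_nonneg. Qed.

Lemma mob_mod_eq u v a : inD u -> inD v -> 0 <= a ->
  (Cmod (Mob v u) = a <-> n2 (u - v)%C = a * a * n2 (1 - Cconj v * u)%C).
Proof.
  intros Hu Hv Ha. pose proof (mob_den_nz v u Hv Hu) as Hd.
  assert (HD : 0 < Cmod (1 - Cconj v * u)%C) by (apply Cmod_gt_0; auto).
  unfold Mob. rewrite Cmod_div by auto. split; intros H.
  - rewrite <- !Cmod_sq. rewrite <- H. field. lra.
  - assert (Cmod (u - v)%C = a * Cmod (1 - Cconj v * u)%C).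
    { rewrite !Cmod_n2. rewrite H. rewrite sqrt_mult_alt by nra. rewrite sqrt_square by lra. reflexivity. }
    rewrite H0. field. lra.
Qed.

Theorem orbit_closed a : 0 <= a < 1 -> rel_closed_in_G (orbit_a0 a).
Proof.
  intros Ha. split.
  - intros y Hy. apply orbit_char in Hy; auto. destruct Hy as [u [v [Hu [Hv [_ ->]]]]].
    exists u, v. auto.
  - exists (fun y : C2 => Phi a y = 0). split. apply Phi_closed.
    intros y. rewrite orbit_char by auto. split.
    + intros [u [v [Hu [Hv [Hr ->]]]]]. split.
      * rewrite Phi_uv. apply (mob_mod_eq u v a Hu Hv (proj1 Ha)) in Hr. lra.
      * exists u, v. auto.
    + intros [HP [z1 [z2 [H1 [H2 ->]]]]]. exists z1, z2. split; auto. split; auto. split; auto.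
      apply mob_mod_eq; auto. lra. rewrite Phi_uv in HP. lra.
Qed.

Lemma polar (w : C) (a : R) : 0 <= a -> Cmod w = a -> exists th, w = ((a * cos th)%R, (a * sin th)%R).
Proof.
  intros Ha Hw. destruct (Req_dec a 0) as [->|Ha0].
  - exists 0. apply Cmod_eq_0 in Hw. rewrite Hw. unfold RtoC. f_equal; ring.
  - assert (Hn : n2 w = a * a) by (rewrite <- Cmod_sq, Hw; ring).
    destruct w as [w1 w2]. unfold n2 in Hn; simpl in Hn.
    set (c := w1 / a). set (d := w2 / a).
    assert (Hcd : c * c + d * d = 1).
    { unfold c, d. replace (w1 / a * (w1 / a) + w2 / a * (w2 / a)) with ((w1 * w1 + w2 * w2) / (a * a)) by (field; lra).
      rewrite Hn. field. lra. }
    assert (Hc : -1 <= c <= 1) by nra.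
    assert (Hs : sqrt (1 - c²) = Rabs d).
    { replace (1 - c²) with (d²) by (unfold Rsqr; lra). apply sqrt_Rsqr_abs. }
    destruct (Rle_or_lt 0 d) as [Hd|Hd].
    + exists (acos c). rewrite cos_acos, sin_acos by auto. rewrite Hs, Rabs_right by lra.
      unfold c, d. f_equal; field; lra.
    + exists (- acos c). rewrite cos_neg, sin_neg, cos_acos, sin_acos by auto. rewrite Hs, Rabs_left by lra.
      unfold c, d. f_equal; field; lra.
Qed.

Lemma ccont_const (c z : C) : ccont (fun _ => c) z.
Proof. intros e He. exists 1. split. lra. intros. rewrite Cminus_self, Cmod_0. auto. Qed.

Lemma ccont_plus f g z : ccont f z -> ccont g z -> ccont (fun w => f w + g w)%C z.
Proof.
  intros Hf Hg e He. destruct (Hf (e/2) ltac:(lra)) as [d1 [Hd1 H1]].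
  destruct (Hg (e/2) ltac:(lra)) as [d2 [Hd2 H2]].
  exists (Rmin d1 d2). split. apply Rmin_pos; auto. intros w Hw.
  specialize (H1 w ltac:(eapply Rlt_le_trans; [exact Hw|apply Rmin_l])).
  specialize (H2 w ltac:(eapply Rlt_le_trans; [exact Hw|apply Rmin_r])).
  replace (f w + g w - (f z + g z))%C with ((f w - f z) + (g w - g z))%C by ring.
  eapply Rle_lt_trans. apply Cmod_triangle. lra.
Qed.

Lemma ccont_conj f z : ccont f z -> ccont (fun w => Cconj (f w)) z.
Proof.
  intros Hf e He. destruct (Hf e He) as [d [Hd H]]. exists d; split; auto. intros w Hw.
  rewrite <- Cminus_conj, Cmod_conj. auto.
Qed.

Lemma ccont_inv f z : ccont f z -> f z <> RtoC 0 -> ccont (fun w => / f w)%C z.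
Proof.
  intros Hf Hz. apply (ccont_comp Cinv f z Hf). eapply cd_cont. apply cd_inv. auto.
Qed.

Lemma ccont_fst_scal (v : C) z : ccont (fun w => RtoC (fst w) * v)%C z.
Proof.
  intros e He. exists (e / (Cmod v + 1)). split. apply Rdiv_lt_0_compat; auto. pose proof (Cmod_ge_0 v); lra.
  intros w Hw. replace (RtoC (fst w) * v - RtoC (fst z) * v)%C with (RtoC (fst w - fst z) * v)%C
    by (unfold RtoC, Cmult, Cminus, Cplus, Copp; simpl; f_equal; ring).
  rewrite Cmod_mult, Cmod_R.
  assert (Rabs (fst w - fst z) <= Cmod (w - z)%C) by (pose proof (fst_le_Cmod (w - z)%C); simpl in H; auto).
  pose proof (Cmod_ge_0 v). pose proof (Rabs_pos (fst w - fst z)).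
  assert (E : e / (Cmod v + 1) * (Cmod v + 1) = e) by (field; lra).
  nra.
Qed.

Lemma rcont_eps (f : R -> R) t : continuous f t ->
  forall e, 0 < e -> exists d, 0 < d /\ forall s, Rabs (s - t) < d -> Rabs (f s - f t) < e.
Proof.
  intros H e He. assert (Hl : locally (f t) (fun y => Rabs (y - f t) < e)).
  { exists (mkposreal e He). intros y Hy. exact Hy. }
  specialize (H _ Hl). destruct H as [d Hd]. exists d. split. apply cond_pos. intros s Hs. apply Hd. exact Hs.
Qed.

Lemma ccont_circle (a th1 dth : R) z :
  ccont (fun w => ((a * cos (th1 + fst w * dth))%R, (a * sin (th1 + fst w * dth))%R)) z.
Proof.
  intros e He.
  assert (Hc : continuous (fun s => a * cos (th1 + s * dth)) (fst z)).
  { apply (@ex_derive_continuous R_AbsRing R_NormedModule). auto_derive. auto. }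
  assert (Hs : continuous (fun s => a * sin (th1 + s * dth)) (fst z)).
  { apply (@ex_derive_continuous R_AbsRing R_NormedModule). auto_derive. auto. }
  destruct (rcont_eps _ _ Hc (e/2) ltac:(lra)) as [d1 [Hd1 H1]].
  destruct (rcont_eps _ _ Hs (e/2) ltac:(lra)) as [d2 [Hd2 H2]].
  exists (Rmin d1 d2). split. apply Rmin_pos; auto. intros w Hw.
  assert (Rabs (fst w - fst z) <= Cmod (w - z)%C) by (pose proof (fst_le_Cmod (w - z)%C); simpl in H; auto).
  specialize (H1 (fst w) ltac:(eapply Rle_lt_trans; [exact H|]; eapply Rlt_le_trans; [exact Hw|apply Rmin_l])).
  specialize (H2 (fst w) ltac:(eapply Rle_lt_trans; [exact H|]; eapply Rlt_le_trans; [exact Hw|apply Rmin_r])).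
  match goal with |- Cmod (?A - ?B)%C < _ => replace (A - B)%C with
    ((a * cos (th1 + fst w * dth) - a * cos (th1 + fst z * dth))%R, (a * sin (th1 + fst w * dth) - a * sin (th1 + fst z * dth))%R)
    by (unfold Cminus, Cplus, Copp; simpl; f_equal; ring) end.
  eapply Rle_lt_trans. apply Cmod_pair_le. lra.
Qed.

Lemma ballC_of_Cmod (x y : C) (eps : posreal) : Cmod (y - x)%C < eps -> @ball C_UniformSpace x eps y.
Proof.
  intros H. pose proof (fst_le_Cmod (y - x)%C). pose proof (snd_le_Cmod (y - x)%C). simpl in *.
  split.
  - change (Rabs (fst y - fst x) < eps). unfold Rminus. lra.
  - change (Rabs (snd y - snd x) < eps). unfold Rminus. lra.
Qed.

Lemma path_cont (A B : C -> C) (D : R -> Prop) t : ccont A (RtoC t) -> ccont B (RtoC t) ->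
  filterlim (fun s : R => ((A (RtoC s), B (RtoC s)) : C2)) (within D (locally t)) (locally ((A (RtoC t), B (RtoC t)) : C2)).
Proof.
  intros HA HB. eapply filterlim_filter_le_1. apply filter_le_within.
  intros P [eps HP].
  destruct (HA eps (cond_pos eps)) as [d1 [Hd1 H1]]. destruct (HB eps (cond_pos eps)) as [d2 [Hd2 H2]].
  exists (mkposreal _ (Rmin_pos _ _ Hd1 Hd2)). intros s Hs. apply HP.
  assert (Hst : Cmod (RtoC s - RtoC t)%C < Rmin d1 d2).
  { rewrite <- RtoC_minus, Cmod_R. exact Hs. }
  split; apply ballC_of_Cmod.
  - apply H1. eapply Rlt_le_trans; [exact Hst|apply Rmin_l].
  - apply H2. eapply Rlt_le_trans; [exact Hst|apply Rmin_r].
Qed.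

Lemma convex_D v1 v2 t : Cmod v1 < 1 -> Cmod v2 < 1 -> 0 <= t <= 1 ->
  Cmod (v1 + RtoC t * (v2 - v1))%C < 1.
Proof.
  intros H1 H2 Ht.
  replace (v1 + RtoC t * (v2 - v1))%C with (RtoC (1 - t) * v1 + RtoC t * v2)%C
    by (unfold RtoC, Cmult, Cminus, Cplus, Copp; simpl; f_equal; ring).
  eapply Rle_lt_trans. apply Cmod_triangle. rewrite !Cmod_mult, !Cmod_R, Rabs_right, (Rabs_right t) by lra.
  set (m := Rmax (Cmod v1) (Cmod v2)).
  assert (m < 1) by (unfold m; apply Rmax_lub_lt; auto).
  assert (Cmod v1 <= m) by apply Rmax_l. assert (Cmod v2 <= m) by apply Rmax_r.
  assert ((1 - t) * Cmod v1 <= (1 - t) * m) by (apply Rmult_le_compat_l; lra).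
  assert (t * Cmod v2 <= t * m) by (apply Rmult_le_compat_l; lra).
  lra.
Qed.

Theorem orbit_path a : 0 <= a < 1 -> path_connected (orbit_a0 a).
Proof.
  intros Ha x y Hx Hy.
  apply orbit_char in Hx; auto. apply orbit_char in Hy; auto.
  destruct Hx as [u1 [v1 [Hu1 [Hv1 [Hr1 ->]]]]]. destruct Hy as [u2 [v2 [Hu2 [Hv2 [Hr2 ->]]]]].
  destruct (polar (Mob v1 u1) a (proj1 Ha) Hr1) as [th1 Hth1].
  destruct (polar (Mob v2 u2) a (proj1 Ha) Hr2) as [th2 Hth2].
  set (V := fun z : C => (v1 + RtoC (fst z) * (v2 - v1))%C).
  set (W := fun z : C => ((a * cos (th1 + fst z * (th2 - th1)))%R, (a * sin (th1 + fst z * (th2 - th1)))%R)).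
  set (U := fun z : C => Mob (- V z) (W z)).
  assert (HV : forall t, 0 <= t <= 1 -> Cmod (V (RtoC t)) < 1) by (intros t Ht; unfold V; simpl; apply convex_D; auto).
  assert (HW : forall z, Cmod (W z) = a).
  { intros z. unfold W. rewrite Cmod_pair.
    replace (a * cos (th1 + fst z * (th2 - th1)) * (a * cos (th1 + fst z * (th2 - th1))) +
      a * sin (th1 + fst z * (th2 - th1)) * (a * sin (th1 + fst z * (th2 - th1)))) with
      ((a * a) * (Rsqr (sin (th1 + fst z * (th2 - th1))) + Rsqr (cos (th1 + fst z * (th2 - th1))))) by (unfold Rsqr; ring).
    rewrite sin2_cos2, Rmult_1_r. apply sqrt_square. lra. }
  assert (HW1 : forall z, Cmod (W z) < 1) by (intros z; rewrite HW; lra).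
  exists (fun s : R => ((U (RtoC s) + V (RtoC s))%C, (U (RtoC s) * V (RtoC s))%C)).
  split; [|split; [|split]].
  - intros t Ht.
    assert (HVt := HV t Ht).
    assert (Hmv : Cmod (- V (RtoC t)) < 1) by (rewrite Cmod_opp; auto).
    assert (HcV : ccont V (RtoC t)) by (unfold V; apply ccont_plus; [apply ccont_const| apply ccont_fst_scal]).
    assert (HcW : ccont W (RtoC t)) by (unfold W; apply ccont_circle).
    assert (HcU : ccont U (RtoC t)).
    { unfold U, Mob. apply ccont_mult.
      - apply ccont_minus; auto. apply (ccont_comp (fun u => - u)%C V); auto.
        intros e He; exists e; split; auto; intros w Hw. replace (- w - - V (RtoC t))%C with (- (w - V (RtoC t)))%C by ring. rewrite Cmod_opp; auto.
      - apply ccont_inv. apply ccont_minus. apply ccont_const. apply ccont_mult; auto.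
        apply ccont_conj. apply (ccont_comp (fun u => - u)%C V); auto.
        intros e He; exists e; split; auto; intros w Hw. replace (- w - - V (RtoC t))%C with (- (w - V (RtoC t)))%C by ring. rewrite Cmod_opp; auto.
        apply mob_den_nz; auto. }
    apply (path_cont (fun z => U z + V z)%C (fun z => U z * V z)%C).
    apply ccont_plus; auto. apply ccont_mult; auto.
  - intros t Ht. apply orbit_char; auto.
    exists (U (RtoC t)), (V (RtoC t)). split; [|split; [|split]]; auto.
    + unfold inD, U. apply mob_in; auto. rewrite Cmod_opp; auto.
    + unfold inD. apply HV; auto.
    + unfold U. rewrite mob_inv' by (auto; rewrite Cmod_opp; auto). apply HW.
  - assert (E0 : V (RtoC 0) = v1) by (unfold V; simpl; ring).
    assert (EW : W (RtoC 0) = Mob v1 u1) by (unfold W; simpl; rewrite Hth1; f_equal; f_equal; f_equal; ring).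
    assert (EU : U (RtoC 0) = u1) by (unfold U; rewrite E0, EW; apply mob_inv; auto).
    rewrite EU, E0. reflexivity.
  - assert (E0 : V (RtoC 1) = v2) by (unfold V; simpl; ring).
    assert (EW : W (RtoC 1) = Mob v2 u2) by (unfold W; simpl; rewrite Hth2; f_equal; f_equal; f_equal; ring).
    assert (EU : U (RtoC 1) = u2) by (unfold U; rewrite E0, EW; apply mob_inv; auto).
    rewrite EU, E0. reflexivity.
Qed.


Theorem lemma2p2 (a : R) (ha : 0 <= a < 1) :
  rel_closed_in_G (orbit_a0 a) /\ path_connected (orbit_a0 a).
Proof.
  split. apply orbit_closed; auto. apply orbit_path; auto.
Qed.
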